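(* Let $\{X_s,\|\cdot\|_s\}_{s\in\mathbb N_0}$ be a sequence of Banach spaces satisfying (F1)–(F3), let $\{\Theta_s\}_{s\in\mathbb N_0}$ be a sequence of $CB$-spaces satisfying (F1)–(F3), and let $\{g_i\}_{i=1}^\infty\in (X_F^* )^{\mathbb N}$ be an $F$-Bessel sequence for $X_F$ with respect to $\Theta_F$. Then: (a) there exists $\{f_i\}_{i=1}^\infty\in(X_F)^{\mathbb N}$ which is a $DF$-Bessel sequence for $X_F^*$ with respect to $\Theta_F^*$ and satisfies $f=\sum_{i=1}^\infty g_i(f)f_i$ for all $f\in X_F$ (convergence in $X_F$) if and only if $\{g_i\}$ is an $F$-frame for $X_F$ with respect to $\Theta_F$; (b) if $\{f_i\}\in(X_F)^{\mathbb N}$ is a $DF$-Bessel sequence for $X_F^*$ with respect to $\Theta_F^*$ with $f=\sum_{i=1}^\infty g_i(f)f_i$ for all $f\in X_F$, then: if all $\Theta_s$ and $\Theta_s^*$ are $CB$-spaces, $\{f_i\}$ is a pre-$DF$-frame for $X_F^*$ with respect to $\Theta_F^*$; and if all $\Theta_s$ are reflexive $CB$-spaces, $\{f_i\}$ is a $DF$-frame for $X_F^*$ with respect to $\Theta_F^*$.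
   Context: Conditions (F1)–(F3) for a sequence $\{Y_s,|\cdot|_s\}_{s\in\mathbb N_0}$ of separable Banach spaces: (F1) $\{0\}\neq\bigcap_sY_s\subseteq\dots\subseteq Y_1\subseteq Y_0$; (F2) $|\cdot|_0\le|\cdot|_1\le\dots$; (F3) $Y_F:=\bigcap_sY_s$ dense in each $Y_s$. $X_F=\bigcap_sX_s$, $\Theta_F=\bigcap_s\Theta_s$. $BK$-space: Banach sequence space with continuous coordinate functionals; $CB$-space: $BK$-space in which the canonical vectors $e_i$ form a Schauder basis. For a $CB$-space $\Theta$, $\Theta^*$ is identified with the $BK$-space $\{\{g(e_i)\}_{i=1}^\infty:g\in\Theta^*\}$ normed by $|||\{g(e_i)\}|||:=\|g\|_{\Theta^*}$. For a Banach space $X$ and $BK$-space $\Theta$: $\{g_i\}\subset X^*$ is a $\Theta$-Bessel sequence if $\{g_i(f)\}\in\Theta$ and $|||\{g_i(f)\}|||\le B\|f\|$ for all $f\in X$; a $\Theta$-frame if moreover $A\|f\|\le|||\{g_i(f)\}|||$ with $A>0$; a Banach frame w.r.t. $\Theta$ if it is a $\Theta$-frame and there is a bounded $V:\Theta\to X$ with $V(\{g_i(f)\})=f$. (For $\{f_i\}\subset X\subseteq X^{**}$ these are applied to $X^*$ via $g\mapsto\{g(f_i)\}$.) $F$-Bessel sequence / pre-$F$-frame / $F$-frame: $\{g_i\}\in(X_F^* )^{\mathbb N}$ with $\{g_i(f)\}\in\Theta_F$ for $f\in X_F$ and for each $s$ a constant $B_s$ with $|||\{g_i(f)\}|||_s\le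 B_s\|f\|_s$ ($F$-Bessel); plus $A_s\|f\|_s\le|||\{g_i(f)\}|||_s$, $A_s>0$ (pre-$F$-frame); plus an $F$-bounded $V:\Theta_F\to X_F$ with $V(\{g_i(f)\})=f$ for $f\in X_F$ ($F$-frame), $F$-bounded meaning $\|Vc\|_s\le K_s|||c|||_s$ for every $s$. $\{f_i\}\in(X_F)^{\mathbb N}$ is a $DF$-Bessel sequence (resp. pre-$DF$-frame, resp. $DF$-frame) for $X_F^*$ w.r.t. $\Theta_F^*$ if for every $s$ it is a $\Theta_s^*$-Bessel sequence (resp. $\Theta_s^*$-frame, resp. Banach frame w.r.t. $\Theta_s^*$) for $X_s^*$. *)

(* Defs.v *)
From Stdlib Require Import Reals Lra ClassicalEpsilon.
Open Scope R_scope.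
Set Implicit Arguments.

Record RVS := { car :> Type; vadd : car -> car -> car; vscal : R -> car -> car; vzero : car }.
Arguments vadd {r}. Arguments vscal {r}. Arguments vzero {r}.

Definition vs_axioms (V : RVS) : Prop :=
  (forall x y z : V, vadd x (vadd y z) = vadd (vadd x y) z) /\
  (forall x y : V, vadd x y = vadd y x) /\
  (forall x : V, vadd vzero x = x) /\
  (forall x : V, vadd x (vscal (-1) x) = vzero) /\
  (forall (a : R) (x y : V), vscal a (vadd x y) = vadd (vscal a x) (vscal a y)) /\
  (forall (a b : R) (x : V), vscal (a + b) x = vadd (vscal a x) (vscal b x)) /\
  (forall (a b : R) (x : V), vscal a (vscal b x) = vscal (a * b) x) /\
  (forall x : V, vscal 1 x = x).

Definition vsub {V : RVS} (x y : V) : V := vadd x (vscal (-1) y).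

Fixpoint vsum {V : RVS} (u : nat -> V) (n : nat) : V :=
  match n with O => vzero | S m => vadd (vsum u m) (u m) end.

(* real sequences (indexed from 0) with pointwise operations *)
Definition Rseq := nat -> R.
Definition seqVS : RVS :=
  {| car := Rseq; vadd := fun a b i => a i + b i; vscal := fun t a i => t * a i;
     vzero := fun _ => 0 |}.
Definition e (i : nat) : seqVS := fun j => if Nat.eqb i j then 1 else 0.

(* supremum of a set of reals (meaningful for nonempty bounded sets) *)
Definition Rsup (E : R -> Prop) : R := epsilon (inhabits 0) (fun m => is_lub E m).

Section Normed.
Context {V : RVS}.

Definition is_subspace (S : V -> Prop) : Prop :=
  S vzero /\ (forall x y, S x -> S y -> S (vadd x y)) /\
  (forall a x, S x -> S (vscal a x)).

Definition is_norm_on (S : V -> Prop) (N : V -> R) : Prop :=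
  forall x y a, S x -> S y ->
    0 <= N x /\ (N x = 0 -> x = vzero) /\ N (vscal a x) = Rabs a * N x /\
    N (vadd x y) <= N x + N y.

Definition conv_in (N : V -> R) (u : nat -> V) (l : V) : Prop :=
  forall eps, 0 < eps -> exists n0, forall n, (n0 <= n)%nat -> N (vsub (u n) l) < eps.

Definition cauchy_in (N : V -> R) (u : nat -> V) : Prop :=
  forall eps, 0 < eps -> exists n0, forall n m, (n0 <= n)%nat -> (n0 <= m)%nat ->
    N (vsub (u n) (u m)) < eps.

Definition complete_in (S : V -> Prop) (N : V -> R) : Prop :=
  forall u, (forall n, S (u n)) -> cauchy_in N u -> exists l, S l /\ conv_in N u l.

Definition separable_in (S : V -> Prop) (N : V -> R) : Prop :=
  exists d : nat -> V, (forall n, S (d n)) /\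
    forall x, S x -> forall eps, 0 < eps -> exists n, N (vsub x (d n)) < eps.

Definition banach (S : V -> Prop) (N : V -> R) : Prop :=
  is_subspace S /\ is_norm_on S N /\ complete_in S N.

Definition sep_banach (S : V -> Prop) (N : V -> R) : Prop :=
  banach S N /\ separable_in S N.

(* (F1)-(F3) for a sequence of separable Banach spaces *)
Definition interF (Y : nat -> V -> Prop) (x : V) : Prop := forall s, Y s x.

Definition Fseq (Y : nat -> V -> Prop) (N : nat -> V -> R) : Prop :=
  (forall s, sep_banach (Y s) (N s)) /\
  (* (F1) *)
  (exists x, interF Y x /\ x <> vzero) /\ (forall s x, Y (S s) x -> Y s x) /\
  (* (F2) *)
  (forall s x, Y (S s) x -> N s x <= N (S s) x) /\
  (* (F3) *)
  (forall s x, Y s x -> forall eps, 0 < eps ->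
     exists y, interF Y y /\ N s (vsub x y) < eps).

Definition is_dual (S : V -> Prop) (N : V -> R) (g : V -> R) : Prop :=
  (forall x y, S x -> S y -> g (vadd x y) = g x + g y) /\
  (forall a x, S x -> g (vscal a x) = a * g x) /\
  (exists C, forall x, S x -> Rabs (g x) <= C * N x).

Definition dnorm (S : V -> Prop) (N : V -> R) (g : V -> R) : R :=
  Rsup (fun r => exists x, S x /\ N x <= 1 /\ r = Rabs (g x)).

Definition is_bidual (S : V -> Prop) (N : V -> R) (P : (V -> R) -> R) : Prop :=
  (forall g h, is_dual S N g -> is_dual S N h -> P (fun x => g x + h x) = P g + P h) /\
  (forall a g, is_dual S N g -> P (fun x => a * g x) = a * P g) /\
  (exists C, forall g, is_dual S N g -> Rabs (P g) <= C * dnorm S N g).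

Definition reflexive (S : V -> Prop) (N : V -> R) : Prop :=
  forall P, is_bidual S N P -> exists x, S x /\ forall g, is_dual S N g -> P g = g x.
End Normed.

Definition BK (Th : seqVS -> Prop) (TN : seqVS -> R) : Prop :=
  banach Th TN /\ forall i, exists C, forall c, Th c -> Rabs (c i) <= C * TN c.

Definition CB (Th : seqVS -> Prop) (TN : seqVS -> R) : Prop :=
  BK Th TN /\ (forall i, Th (e i)) /\
  (forall c, Th c -> exists! a : Rseq,
      conv_in TN (fun n => vsum (fun i => vscal (a i) (e i)) n) c).

(* Theta^* identified with the BK-space {(g(e_i))_i : g in Theta^*}, normed by ||g|| *)
Definition dualseq (Th : seqVS -> Prop) (TN : seqVS -> R) (d : Rseq) : Prop :=
  exists g, is_dual Th TN g /\ forall i, g (e i) = d i.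

Definition dualseq_norm (Th : seqVS -> Prop) (TN : seqVS -> R) (d : Rseq) : R :=
  Rsup (fun r => exists g, is_dual Th TN g /\ (forall i, g (e i) = d i) /\
                           r = dnorm Th TN g).

Section Frames.
Context {V : RVS}.
Variables (X : nat -> V -> Prop) (N : nat -> V -> R)
          (Th : nat -> seqVS -> Prop) (TN : nat -> seqVS -> R).

(* X_F^* : linear functionals on X_F continuous for the Frechet topology *)
Definition XF_dual (h : V -> R) : Prop :=
  (forall x y, interF X x -> interF X y -> h (vadd x y) = h x + h y) /\
  (forall a x, interF X x -> h (vscal a x) = a * h x) /\
  (exists s C, forall x, interF X x -> Rabs (h x) <= C * N s x).

Definition F_Bessel (g : nat -> V -> R) : Prop :=
  (forall i, XF_dual (g i)) /\
  (forall f, interF X f -> interF Th (fun i => g i f)) /\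
  (forall s, exists B, forall f, interF X f -> TN s (fun i => g i f) <= B * N s f).

Definition pre_F_frame (g : nat -> V -> R) : Prop :=
  F_Bessel g /\
  (forall s, exists A, 0 < A /\ forall f, interF X f -> A * N s f <= TN s (fun i => g i f)).

Definition F_bounded_op (W : seqVS -> V) : Prop :=
  (forall c d, interF Th c -> interF Th d -> W (vadd c d) = vadd (W c) (W d)) /\
  (forall a c, interF Th c -> W (vscal a c) = vscal a (W c)) /\
  (forall c, interF Th c -> interF X (W c)) /\
  (forall s, exists K, forall c, interF Th c -> N s (W c) <= K * TN s c).

Definition F_frame (g : nat -> V -> R) : Prop :=
  pre_F_frame g /\
  exists W, F_bounded_op W /\ forall f, interF X f -> W (fun i => g i f) = f.

Definition Bessel_dual_s (s : nat) (f : nat -> V) : Prop :=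
  (forall g, is_dual (X s) (N s) g -> dualseq (Th s) (TN s) (fun i => g (f i))) /\
  (exists B, forall g, is_dual (X s) (N s) g ->
     dualseq_norm (Th s) (TN s) (fun i => g (f i)) <= B * dnorm (X s) (N s) g).

Definition frame_dual_s (s : nat) (f : nat -> V) : Prop :=
  Bessel_dual_s s f /\
  (exists A, 0 < A /\ forall g, is_dual (X s) (N s) g ->
     A * dnorm (X s) (N s) g <= dualseq_norm (Th s) (TN s) (fun i => g (f i))).

(* bounded linear operator Theta_s^* -> X_s^* (functionals compared on X_s) *)
Definition bounded_op_dual_s (s : nat) (W : Rseq -> V -> R) : Prop :=
  (forall c d, dualseq (Th s) (TN s) c -> dualseq (Th s) (TN s) d ->
     forall x, X s x -> W (fun i => c i + d i) x = W c x + W d x) /\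
  (forall a c, dualseq (Th s) (TN s) c ->
     forall x, X s x -> W (fun i => a * c i) x = a * W c x) /\
  (forall c, dualseq (Th s) (TN s) c -> is_dual (X s) (N s) (W c)) /\
  (exists K, forall c, dualseq (Th s) (TN s) c ->
     dnorm (X s) (N s) (W c) <= K * dualseq_norm (Th s) (TN s) c).

Definition Banach_frame_dual_s (s : nat) (f : nat -> V) : Prop :=
  frame_dual_s s f /\
  exists W, bounded_op_dual_s s W /\
    forall g, is_dual (X s) (N s) g -> forall x, X s x -> W (fun i => g (f i)) x = g x.

Definition DF_Bessel (f : nat -> V) : Prop :=
  (forall i, interF X (f i)) /\ forall s, Bessel_dual_s s f.
Definition pre_DF_frame (f : nat -> V) : Prop :=
  (forall i, interF X (f i)) /\ forall s, frame_dual_s s f.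
Definition DF_frame (f : nat -> V) : Prop :=
  (forall i, interF X (f i)) /\ forall s, Banach_frame_dual_s s f.

(* f = sum_i g_i(f) f_i for all f in X_F, convergence in X_F (in every norm) *)
Definition reconstructs (g : nat -> V -> R) (f : nat -> V) : Prop :=
  forall x, interF X x -> forall s,
    conv_in (N s) (fun n => vsum (fun i => vscal (g i x) (f i)) n) x.
End Frames.

(* Main.v *)
Require Import Defs.
From Stdlib Require Import Reals.
From Stdlib Require Import Lra Lia ClassicalEpsilon Classical FunctionalExtensionality.
Open Scope R_scope.

Lemma le_eps (a b : R) : (forall eps, 0 < eps -> a <= b + eps) -> a <= b.
Proof. intros H. destruct (Rle_dec a b) as [h|h]; auto.
  assert (0 < (a - b)/2) by lra. specialize (H _ H0). lra. Qed.

Lemma eq_eps (a b : R) : (forall eps, 0 < eps -> Rabs (a - b) <= eps) -> a = b.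
Proof. intros H. destruct (Req_dec a b) as [h|h]; auto.
  assert (0 < Rabs (a - b) / 2). { assert (Rabs (a-b) > 0) by (apply Rabs_pos_lt; lra). lra. }
  specialize (H _ H0). lra. Qed.

Lemma Rsup_lub (E : R -> Prop) : bound E -> (exists x, E x) -> is_lub E (Rsup E).
Proof. intros Hb He. unfold Rsup. apply epsilon_spec.
  destruct (completeness E Hb He) as [m Hm]. eauto. Qed.

Lemma Rsup_eq (E : R -> Prop) m : is_lub E m -> Rsup E = m.
Proof. intros H. apply (is_lub_u E); auto. apply Rsup_lub.
  - exists m. apply H.
  - destruct (classic (exists x, E x)) as [h|h]; auto.
    exfalso. (* empty set has no lub: m-1 is an upper bound *)
    assert (is_upper_bound E (m - 1)). { intros x Hx. exfalso; eauto. }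
    destruct H as [_ H]. specialize (H _ H0). lra. Qed.

Lemma Rsup_ub (E : R -> Prop) x : bound E -> E x -> x <= Rsup E.
Proof. intros Hb Hx. apply (Rsup_lub E Hb (ex_intro _ x Hx)). auto. Qed.

Lemma Rsup_le (E : R -> Prop) b : (exists x, E x) -> (forall x, E x -> x <= b) -> Rsup E <= b.
Proof. intros He Hb. assert (HB : bound E) by (exists b; intros x; auto).
  apply (Rsup_lub E HB He). intros x; auto. Qed.

Lemma Rabs_m1 : Rabs (-1) = 1.
Proof. rewrite Rabs_left by lra. lra. Qed.

Lemma small_mul k eps : 0 <= k -> 0 < eps -> k * (eps / (k + 1)) < eps.
Proof. intros. assert (k * (eps / (k+1)) = eps - eps / (k+1)) by (field; lra).
  assert (0 < eps / (k+1)) by (apply Rdiv_lt_0_compat; lra). lra. Qed.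

Lemma pos_div eps k : 0 <= k -> 0 < eps -> 0 < eps / (k + 1).
Proof. intros; apply Rdiv_lt_0_compat; lra. Qed.

Lemma Rabs_le_inv a b : Rabs a <= b -> - b <= a <= b.
Proof. unfold Rabs; destruct (Rcase_abs a); lra. Qed.

Lemma Rabs_lt_inv a b : Rabs a < b -> - b < a < b.
Proof. unfold Rabs; destruct (Rcase_abs a); lra. Qed.

Existing Class vs_axioms.
Existing Class is_subspace.
Existing Class is_norm_on.
Existing Class is_dual.

Section VA.
Context {V : RVS} {Hv : vs_axioms V}.

Lemma vA (x y z : V) : vadd x (vadd y z) = vadd (vadd x y) z.
Proof. apply Hv. Qed.
Lemma vC (x y : V) : vadd x y = vadd y x.
Proof. apply Hv. Qed.
Lemma v0l (x : V) : vadd vzero x = x.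
Proof. apply Hv. Qed.
Lemma vNr (x : V) : vadd x (vscal (-1) x) = vzero.
Proof. apply Hv. Qed.
Lemma vDr a (x y : V) : vscal a (vadd x y) = vadd (vscal a x) (vscal a y).
Proof. apply Hv. Qed.
Lemma vDl a b (x : V) : vscal (a + b) x = vadd (vscal a x) (vscal b x).
Proof. apply Hv. Qed.
Lemma vM a b (x : V) : vscal a (vscal b x) = vscal (a * b) x.
Proof. apply Hv. Qed.
Lemma v1 (x : V) : vscal 1 x = x.
Proof. apply Hv. Qed.

Lemma v0r (x : V) : vadd x vzero = x.
Proof. rewrite vC; apply v0l. Qed.
Lemma vNl (x : V) : vadd (vscal (-1) x) x = vzero.
Proof. rewrite vC; apply vNr. Qed.

Lemma vcancel (a b c : V) : vadd a b = vadd a c -> b = c.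
Proof. intros H. rewrite <- (v0l b), <- (v0l c), <- (vNl a), <- !vA, H. reflexivity. Qed.

Lemma vscal0 (x : V) : vscal 0 x = vzero.
Proof. apply (vcancel (vscal 0 x)). rewrite v0r, <- vDl. f_equal; ring. Qed.

Lemma vscalz a : vscal a (@vzero V) = vzero.
Proof. apply (vcancel (vscal a vzero)). rewrite v0r, <- vDr, v0l. reflexivity. Qed.

Lemma vsubxx (x : V) : vsub x x = vzero.
Proof. apply vNr. Qed.

Lemma vsub_add (x y : V) : vadd (vsub x y) y = x.
Proof. unfold vsub. rewrite <- vA, vNl, v0r. reflexivity. Qed.

Lemma vsub_eq0 (x y : V) : vsub x y = vzero -> x = y.
Proof. intros H. rewrite <- (vsub_add x y), H, v0l. reflexivity. Qed.

Lemma vsubx0 (x : V) : vsub x vzero = x.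
Proof. unfold vsub. rewrite vscalz, v0r. reflexivity. Qed.

Lemma vsub0x (x : V) : vsub vzero x = vscal (-1) x.
Proof. unfold vsub. apply v0l. Qed.

Lemma vAC (a b c d : V) : vadd (vadd a b) (vadd c d) = vadd (vadd a c) (vadd b d).
Proof. rewrite <- !vA. f_equal. rewrite !vA. f_equal. apply vC. Qed.

Lemma vsub_addd (a b c d : V) : vsub (vadd a b) (vadd c d) = vadd (vsub a c) (vsub b d).
Proof. unfold vsub. rewrite vDr. apply vAC. Qed.

Lemma vscal_sub t (a b : V) : vscal t (vsub a b) = vsub (vscal t a) (vscal t b).
Proof. unfold vsub. rewrite vDr, !vM. f_equal. f_equal. ring. Qed.

Lemma vsub_sym (a b : V) : vsub a b = vscal (-1) (vsub b a).
Proof. unfold vsub. rewrite vDr, vM. replace (-1 * -1) with 1 by ring. rewrite v1. apply vC. Qed.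

Lemma vsub_tri (a b c : V) : vsub a c = vadd (vsub a b) (vsub b c).
Proof. unfold vsub. rewrite <- vA. f_equal. rewrite vA, vNl, v0l. reflexivity. Qed.

Lemma vadd_sub (a b : V) : vsub (vadd a b) b = a.
Proof. unfold vsub. rewrite <- vA, vNr, v0r. reflexivity. Qed.

Lemma vscal_neg (a : R) (x : V) : vscal (-a) x = vscal (-1) (vscal a x).
Proof. rewrite vM. f_equal; ring. Qed.

Fixpoint rsum (u : nat -> R) (n : nat) : R :=
  match n with O => 0 | S m => rsum u m + u m end.

Lemma rsum_ext (a b : nat -> R) n : (forall i, a i = b i) -> rsum a n = rsum b n.
Proof. intros H; induction n; simpl; auto. rewrite IHn, H; auto. Qed.

Lemma vsum_add (u w : nat -> V) n : vsum (fun i => vadd (u i) (w i)) n = vadd (vsum u n) (vsum w n).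
Proof. induction n; simpl. now rewrite v0l. rewrite IHn. apply vAC. Qed.

Lemma vsum_scal a (u : nat -> V) n : vsum (fun i => vscal a (u i)) n = vscal a (vsum u n).
Proof. induction n; simpl. now rewrite vscalz. rewrite IHn, vDr. reflexivity. Qed.

End VA.

Section NS.
Context {V : RVS} {Hv : vs_axioms V} {S : V -> Prop} {N : V -> R}
  {HS : is_subspace S} {HN : is_norm_on S N}.

Lemma S0 : S vzero. Proof. apply HS. Qed.
Lemma Sadd x y : S x -> S y -> S (vadd x y). Proof. apply HS. Qed.
Lemma Sscal a x : S x -> S (vscal a x). Proof. apply HS. Qed.
Lemma Ssub x y : S x -> S y -> S (vsub x y).
Proof. intros; unfold vsub; apply Sadd; auto; apply Sscal; auto. Qed.

Lemma Nnn x : S x -> 0 <= N x. Proof. intros H; apply (HN x x 0 H H). Qed.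
Lemma Neq0 x : S x -> N x = 0 -> x = vzero. Proof. intros H; apply (HN x x 0 H H). Qed.
Lemma Nscal a x : S x -> N (vscal a x) = Rabs a * N x. Proof. intros H; apply (HN x x a H H). Qed.
Lemma Ntri x y : S x -> S y -> N (vadd x y) <= N x + N y. Proof. intros H H'; apply (HN x y 0 H H'). Qed.
Lemma N0 : N vzero = 0.
Proof. rewrite <- (vscal0 vzero), Nscal by apply S0. rewrite Rabs_R0; ring. Qed.
Lemma Nsym x y : S x -> S y -> N (vsub x y) = N (vsub y x).
Proof. intros. rewrite (vsub_sym x y), Nscal by (apply Ssub; auto).
  rewrite Rabs_m1; ring. Qed.
Lemma Nstri x y z : S x -> S y -> S z -> N (vsub x z) <= N (vsub x y) + N (vsub y z).
Proof. intros. rewrite (vsub_tri x y z). apply Ntri; apply Ssub; auto. Qed.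
Lemma Nsubx0 x : N (vsub x vzero) = N x. Proof. now rewrite vsubx0. Qed.
Lemma Nrev x y : S x -> S y -> Rabs (N x - N y) <= N (vsub x y).
Proof. intros. assert (N x <= N (vsub x y) + N y).
  { rewrite <- (vsub_add x y) at 1. apply Ntri; auto. apply Ssub; auto. }
  assert (Hy2 : N y <= N (vsub y x) + N x).
  { rewrite <- (vsub_add y x) at 1. apply Ntri; auto. apply Ssub; auto. }
  rewrite (Nsym y x) in Hy2 by auto. apply Rabs_le; lra. Qed.
Lemma Nneg x : S x -> N (vscal (-1) x) = N x.
Proof. intros; rewrite Nscal by auto. rewrite Rabs_m1; ring. Qed.

Lemma Ssum (u : nat -> V) n : (forall i, S (u i)) -> S (vsum u n).
Proof. intros H; induction n; simpl. apply S0. apply Sadd; auto. Qed.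

Lemma conv_unique u x y : (forall n, S (u n)) -> S x -> S y ->
  conv_in N u x -> conv_in N u y -> x = y.
Proof. intros Hu Hx Hy Cx Cy. apply (vsub_eq0). apply Neq0. apply Ssub; auto.
  apply Rle_antisym; [|apply Nnn, Ssub; auto].
  apply le_eps; intros eps He.
  destruct (Cx (eps/2)) as [n1 H1]; try lra. destruct (Cy (eps/2)) as [n2 H2]; try lra.
  specialize (H1 (max n1 n2) (Nat.le_max_l _ _)). specialize (H2 (max n1 n2) (Nat.le_max_r _ _)).
  pose proof (Nstri x (u (max n1 n2)) y Hx (Hu _) Hy).
  rewrite (Nsym x (u (max n1 n2))) in H by auto. lra. Qed.

Lemma conv_cauchy u x : (forall n, S (u n)) -> S x -> conv_in N u x -> cauchy_in N u.
Proof. intros Hu Hx C eps He. destruct (C (eps/2)) as [n0 H]; try lra.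
  exists n0; intros n m Hn Hm. pose proof (Nstri (u n) x (u m) (Hu _) Hx (Hu _)).
  rewrite (Nsym x (u m)) in H0 by auto. pose proof (H n Hn); pose proof (H m Hm). lra. Qed.

Lemma conv_add u w x y : (forall n, S (u n)) -> (forall n, S (w n)) -> S x -> S y ->
  conv_in N u x -> conv_in N w y -> conv_in N (fun n => vadd (u n) (w n)) (vadd x y).
Proof. intros Hu Hw Hx Hy Cx Cy eps He.
  destruct (Cx (eps/2)) as [n1 H1]; try lra. destruct (Cy (eps/2)) as [n2 H2]; try lra.
  exists (max n1 n2); intros n Hn.
  rewrite (vsub_addd).
  pose proof (Ntri (vsub (u n) x) (vsub (w n) y) ltac:(apply Ssub; auto) ltac:(apply Ssub; auto)).
  specialize (H1 n ltac:(lia)); specialize (H2 n ltac:(lia)). lra. Qed.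

Lemma conv_scal a u x : (forall n, S (u n)) -> S x ->
  conv_in N u x -> conv_in N (fun n => vscal a (u n)) (vscal a x).
Proof. intros Hu Hx Cx eps He.
  destruct (Cx (eps/(Rabs a + 1))) as [n1 H1].
  { apply Rdiv_lt_0_compat; auto. pose proof (Rabs_pos a); lra. }
  exists n1; intros n Hn. rewrite <- (vscal_sub), Nscal by (apply Ssub; auto).
  specialize (H1 n Hn). pose proof (Rabs_pos a).
  assert (Rabs a * N (vsub (u n) x) <= Rabs a * (eps / (Rabs a + 1))).
  { apply Rmult_le_compat_l; auto. lra. }
  assert (Rabs a * (eps / (Rabs a + 1)) < eps).
  { apply small_mul; auto. }
  lra. Qed.

Section Dual.
Context (g : V -> R) {Hg : is_dual S N g}.

Lemma g0 : g vzero = 0.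
Proof. rewrite <- (vscal0 vzero). destruct Hg as [_ [H _]]. rewrite H by apply S0. ring. Qed.
Lemma gadd x y : S x -> S y -> g (vadd x y) = g x + g y. Proof. apply Hg. Qed.
Lemma gscal a x : S x -> g (vscal a x) = a * g x. Proof. apply Hg. Qed.
Lemma gsub x y : S x -> S y -> g (vsub x y) = g x - g y.
Proof. intros. unfold vsub. rewrite gadd, gscal by (auto; apply Sscal; auto). ring. Qed.

Lemma gsum (u : nat -> V) n : (forall i, S (u i)) -> g (vsum u n) = rsum (fun i => g (u i)) n.
Proof. intros H; induction n; simpl. apply g0. rewrite gadd by (auto; apply Ssum; auto). now rewrite IHn. Qed.

Let E := fun r => exists x, S x /\ N x <= 1 /\ r = Rabs (g x).

Lemma E_bound : bound E.
Proof. destruct Hg as [_ [_ [C HC]]]. exists (Rabs C). intros r [x [Hx [Hn ->]]].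
  eapply Rle_trans. apply HC; auto. pose proof (Nnn x Hx).
  pose proof (Rle_abs C). pose proof (Rabs_pos C).
  assert (C * N x <= Rabs C * N x) by (apply Rmult_le_compat_r; auto). nra. Qed.

Lemma E_ne : exists r, E r.
Proof. exists 0, vzero. split; [apply S0|]. rewrite N0, g0, Rabs_R0. split; lra. Qed.

Lemma dnorm_lub : is_lub E (dnorm S N g).
Proof. apply Rsup_lub. apply E_bound. apply E_ne. Qed.

Lemma dnorm_nn : 0 <= dnorm S N g.
Proof. destruct E_ne as [r Hr]. destruct dnorm_lub as [H _]. pose proof (H r Hr).
  destruct Hr as [x [_ [_ ->]]]. pose proof (Rabs_pos (g x)). lra. Qed.

Lemma dnorm_bound x : S x -> Rabs (g x) <= dnorm S N g * N x.
Proof. intros Hx. destruct (Req_dec (N x) 0) as [h|h].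
  - rewrite (Neq0 x Hx h), g0, Rabs_R0. pose proof dnorm_nn. rewrite N0. lra.
  - pose proof (Nnn x Hx). assert (0 < N x) by lra.
    assert (E (Rabs (g (vscal (/ N x) x)))).
    { exists (vscal (/ N x) x). split. apply Sscal; auto. split; auto.
      rewrite Nscal by auto. rewrite Rabs_inv, Rabs_pos_eq by lra. rewrite Rinv_l; lra. }
    destruct dnorm_lub as [Hu _]. specialize (Hu _ H1).
    rewrite gscal, Rabs_mult, Rabs_inv, Rabs_pos_eq in Hu by (auto; lra).
    apply (Rmult_le_reg_r (/ N x)). apply Rinv_0_lt_compat; auto.
    rewrite Rmult_assoc, Rinv_r by lra. lra. Qed.

Lemma dnorm_le C : 0 <= C -> (forall x, S x -> Rabs (g x) <= C * N x) -> dnorm S N g <= C.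
Proof. intros HC H. destruct dnorm_lub as [_ Hl]. apply Hl. intros r [x [Hx [Hn ->]]].
  eapply Rle_trans. apply H; auto. pose proof (Nnn x Hx). nra. Qed.

Lemma g_lip x y : S x -> S y -> Rabs (g x - g y) <= dnorm S N g * N (vsub x y).
Proof. intros. rewrite <- gsub by auto. apply dnorm_bound. apply Ssub; auto. Qed.
End Dual.

Lemma dnorm_ext g h : is_dual S N g -> is_dual S N h -> (forall x, S x -> g x = h x) ->
  dnorm S N g = dnorm S N h.
Proof. intros Hg Hh E. apply Rle_antisym; apply dnorm_le; auto using dnorm_nn.
  - intros x Hx; rewrite E by auto; apply dnorm_bound; auto.
  - intros x Hx; rewrite <- E by auto; apply dnorm_bound; auto. Qed.

End NS.

Definition ext {V : RVS} (D : V -> Prop) (N : V -> R) (L : R) (phi : V -> R) (x : V) : R :=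
  Rsup (fun r => exists y, D y /\ r = phi y - L * N (vsub y x)).

Definition dense_in {V : RVS} (D S : V -> Prop) (N : V -> R) : Prop :=
  forall x, S x -> forall eps, 0 < eps -> exists y, D y /\ N (vsub x y) < eps.

Section Ext.
Context {V : RVS} {Hv : vs_axioms V} {S : V -> Prop} {N : V -> R}
  {HS : is_subspace S} {HN : is_norm_on S N}.
Variables (D : V -> Prop) (L : R) (phi : V -> R).
Hypothesis DS : forall x, D x -> S x.
Hypothesis D0 : D vzero.
Hypothesis HL : 0 <= L.
Hypothesis Hlip : forall y y', D y -> D y' -> Rabs (phi y - phi y') <= L * N (vsub y y').

Lemma Lmul a b : a <= b -> L * a <= L * b.
Proof. intros; apply Rmult_le_compat_l; auto. Qed.

Lemma ext_spec x : S x -> forall y, D y -> Rabs (phi y - ext D N L phi x) <= L * N (vsub y x).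
Proof. intros Hx y Hy.
  set (E := fun r => exists y, D y /\ r = phi y - L * N (vsub y x)).
  assert (HB : bound E).
  { exists (phi vzero + L * N (vsub vzero x)). intros r [y' [Hy' ->]].
    pose proof (Hlip y' vzero Hy' D0). pose proof (Nstri y' x vzero (DS _ Hy') Hx (DS _ D0)).
    rewrite (Nsym x vzero) in H0 by auto using DS.
    apply Lmul in H0. apply Rabs_le_inv in H. lra. }
  apply Rabs_le. split.
    - assert (ext D N L phi x <= phi y + L * N (vsub y x)).
      { apply Rsup_le. exists (phi vzero - L * N (vsub vzero x)), vzero; auto.
        intros r [y' [Hy' ->]].
        pose proof (Hlip y' y Hy' Hy). pose proof (Nstri y' x y (DS _ Hy') Hx (DS _ Hy)).
        rewrite (Nsym x y) in H0 by auto using DS.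
        apply Lmul in H0. apply Rabs_le_inv in H. lra. }
      lra.
    - assert (phi y - L * N (vsub y x) <= ext D N L phi x).
      { apply Rsup_ub; auto. exists y; auto. }
      lra. Qed.

Lemma ext_onD y0 : D y0 -> ext D N L phi y0 = phi y0.
Proof. intros H. pose proof (ext_spec y0 (DS _ H) y0 H). rewrite vsubxx, N0 in H0 by auto.
  apply Rabs_le_inv in H0. lra. Qed.

Hypothesis Hd : dense_in D S N.

Lemma dense2 x eps : S x -> 0 < eps -> exists y, D y /\ N (vsub y x) < eps.
Proof. intros Hx He. destruct (Hd x Hx eps He) as [y [Hy Hn]]. exists y; split; auto.
  rewrite (Nsym y x) by auto. auto. Qed.

Lemma ext_unique x M l : S x -> 0 <= M -> (forall y, D y -> Rabs (phi y - l) <= M * N (vsub y x)) ->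
  ext D N L phi x = l.
Proof. intros Hx HM H. apply eq_eps. intros eps He.
  destruct (dense2 x (eps / (L + M + 1)) Hx) as [y [Hy Hn]]. apply pos_div; lra.
  pose proof (ext_spec x Hx y Hy). pose proof (H y Hy).
  pose proof (Nnn (vsub y x) ltac:(apply Ssub; auto)).
  pose proof (small_mul (L + M) eps ltac:(lra) He).
  assert ((L + M) * N (vsub y x) <= (L + M) * (eps / (L + M + 1))) by (apply Rmult_le_compat_l; lra).
  apply Rabs_le_inv in H0; apply Rabs_le_inv in H1. apply Rabs_le. lra. Qed.

Lemma ext_lip x x' : S x -> S x' -> Rabs (ext D N L phi x - ext D N L phi x') <= L * N (vsub x x').
Proof. intros Hx Hx'. apply le_eps; intros eps He.
  destruct (dense2 x (eps / (2 * L + 1)) Hx) as [y [Hy Hn]]. apply pos_div; lra.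
  pose proof (ext_spec x Hx y Hy). pose proof (ext_spec x' Hx' y Hy).
  pose proof (Nstri y x x' (DS _ Hy) Hx Hx'). apply Lmul in H1.
  pose proof (small_mul (2 * L) eps ltac:(lra) He).
  assert ((2 * L) * N (vsub y x) <= (2 * L) * (eps / (2 * L + 1))) by (apply Rmult_le_compat_l; lra).
  apply Rabs_le_inv in H; apply Rabs_le_inv in H0. apply Rabs_le. lra. Qed.

Lemma ext_agree psi M : 0 <= M -> (forall x x', S x -> S x' -> Rabs (psi x - psi x') <= M * N (vsub x x')) ->
  (forall y, D y -> psi y = phi y) -> forall x, S x -> ext D N L phi x = psi x.
Proof. intros HM Hp He x Hx. apply (ext_unique x M); auto. intros y Hy. rewrite <- He by auto.
  apply Hp; auto. Qed.

Lemma ext_bound M : 0 <= M -> (forall y, D y -> Rabs (phi y) <= M * N y) ->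
  forall x, S x -> Rabs (ext D N L phi x) <= M * N x.
Proof. intros HM Hb x Hx. apply le_eps; intros eps He.
  destruct (dense2 x (eps / (M + L + 1)) Hx) as [y [Hy Hn]]. apply pos_div; lra.
  pose proof (ext_spec x Hx y Hy). pose proof (Hb y Hy).
  pose proof (Nrev y x (DS _ Hy) Hx). apply Rabs_le_inv in H1.
  assert (M * N y <= M * (N x + N (vsub y x))) by (apply Rmult_le_compat_l; lra).
  pose proof (small_mul (M + L) eps ltac:(lra) He).
  assert ((M + L) * N (vsub y x) <= (M + L) * (eps / (M + L + 1))) by (apply Rmult_le_compat_l; lra).
  apply Rabs_le_inv in H; apply Rabs_le_inv in H0. apply Rabs_le. lra. Qed.

Hypothesis DSub : is_subspace D.
Hypothesis phi_add : forall y y', D y -> D y' -> phi (vadd y y') = phi y + phi y'.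
Hypothesis phi_scal : forall a y, D y -> phi (vscal a y) = a * phi y.

Lemma ext_add x x' : S x -> S x' -> ext D N L phi (vadd x x') = ext D N L phi x + ext D N L phi x'.
Proof. intros Hx Hx'. apply eq_eps; intros eps He.
  destruct (dense2 x (eps / (4 * L + 1)) Hx) as [y [Hy Hn]]. apply pos_div; lra.
  destruct (dense2 x' (eps / (4 * L + 1)) Hx') as [y' [Hy' Hn']]. apply pos_div; lra.
  assert (Dyy : D (vadd y y')) by (apply DSub; auto).
  pose proof (ext_spec _ (Sadd _ _ Hx Hx') _ Dyy). rewrite phi_add in H by auto.
  rewrite vsub_addd in H by auto.
  pose proof (Ntri (vsub y x) (vsub y' x') ltac:(apply Ssub; auto) ltac:(apply Ssub; auto)).
  apply Lmul in H0.
  pose proof (ext_spec x Hx y Hy). pose proof (ext_spec x' Hx' y' Hy').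
  pose proof (small_mul (4 * L) eps ltac:(lra) He).
  assert ((4 * L) * (N (vsub y x) + N (vsub y' x')) <= (4 * L) * (2 * (eps / (4 * L + 1)))) by (apply Rmult_le_compat_l; lra).
  apply Rabs_le_inv in H; apply Rabs_le_inv in H1; apply Rabs_le_inv in H2. apply Rabs_le. lra. Qed.

Lemma ext_scal a x : S x -> ext D N L phi (vscal a x) = a * ext D N L phi x.
Proof. intros Hx. apply eq_eps; intros eps He.
  pose proof (Rabs_pos a).
  destruct (dense2 x (eps / (2 * Rabs a * L + 1)) Hx) as [y [Hy Hn]]. apply pos_div; auto. nra.
  assert (Day : D (vscal a y)) by (apply DSub; auto).
  pose proof (ext_spec _ (Sscal a x Hx) _ Day). rewrite phi_scal in H0 by auto.
  rewrite <- vscal_sub, (Nscal (N:=N)) in H0 by (auto; apply Ssub; auto).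
  pose proof (ext_spec x Hx y Hy).
  assert (Rabs (a * phi y - a * ext D N L phi x) <= Rabs a * (L * N (vsub y x))).
  { replace (a * phi y - a * ext D N L phi x) with (a * (phi y - ext D N L phi x)) by ring.
    rewrite Rabs_mult. apply Rmult_le_compat_l; auto. }
  pose proof (small_mul (2 * Rabs a * L) eps ltac:(nra) He).
  assert ((2 * Rabs a * L) * N (vsub y x) <= (2 * Rabs a * L) * (eps / (2 * Rabs a * L + 1))) by (apply Rmult_le_compat_l; nra).
  apply Rabs_le_inv in H0; apply Rabs_le_inv in H2. apply Rabs_le. nra. Qed.

Lemma ext_dual : (forall y, D y -> Rabs (phi y) <= L * N y) -> is_dual S N (ext D N L phi).
Proof. intros Hb. split; [|split].
  - intros; apply ext_add; auto.
  - intros; apply ext_scal; auto.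
  - exists L. apply ext_bound; auto. Qed.
End Ext.

Lemma dense_bound {V : RVS} {Hv : vs_axioms V} {S : V -> Prop} {N : V -> R}
  {HS : is_subspace S} {HN : is_norm_on S N} (D : V -> Prop) (h : V -> R) (M : R) :
  (forall x, D x -> S x) -> D vzero -> dense_in D S N -> is_dual S N h -> 0 <= M ->
  (forall y, D y -> Rabs (h y) <= M * N y) -> forall x, S x -> Rabs (h x) <= M * N x.
Proof. intros DS D0 Hd Hh HM Hb.
  assert (Hn := dnorm_nn h).
  assert (E : forall x, S x -> ext D N (dnorm S N h) h x = h x).
  { apply (ext_agree (S := S)) with (M := dnorm S N h); auto.
    - intros; apply g_lip; auto.
    - intros; apply g_lip; auto. }
  intros x Hx. rewrite <- E by auto. apply (ext_bound (S := S)); auto.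
  intros; apply g_lip; auto. Qed.

Section HB.
Context {V : RVS} {Hv : vs_axioms V} {S : V -> Prop} {N : V -> R}
  {HS : is_subspace S} {HN : is_norm_on S N}.

Definition good (M : V -> Prop) (phi : V -> R) : Prop :=
  (forall z, M z -> S z) /\ is_subspace M /\
  (forall x y, M x -> M y -> phi (vadd x y) = phi x + phi y) /\
  (forall a x, M x -> phi (vscal a x) = a * phi x) /\
  (forall z, M z -> phi z <= N z).

Definition stepM (M : V -> Prop) (y : V) (z : V) : Prop :=
  exists m t, M m /\ z = vadd m (vscal t y).
Definition stepa (M : V -> Prop) (phi : V -> R) (y : V) : R :=
  Rsup (fun r => exists m, M m /\ r = phi m - N (vsub m y)).
Definition stepphi (M : V -> Prop) (phi : V -> R) (y : V) (z : V) : R :=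
  epsilon (inhabits 0) (fun r => exists m t, M m /\ z = vadd m (vscal t y) /\ r = phi m + t * stepa M phi y).
Definition step (p : (V -> Prop) * (V -> R)) (y : V) : (V -> Prop) * (V -> R) :=
  if excluded_middle_informative (fst p y) then p
  else (stepM (fst p) y, stepphi (fst p) (snd p) y).

Lemma vsubsub (z a b : V) : vsub (vsub z a) (vsub z b) = vsub b a.
Proof. change (vsub (vadd z (vscal (-1) a)) (vadd z (vscal (-1) b)) = vsub b a).
  rewrite vsub_addd, vsubxx, v0l. unfold vsub. rewrite vM.
  replace (-1 * -1) with 1 by ring. rewrite v1. apply vC. Qed.

Lemma decomp_unique (M : V -> Prop) (y m m' : V) (t t' : R) : is_subspace M -> ~ M y -> M m -> M m' ->
  vadd m (vscal t y) = vadd m' (vscal t' y) -> t = t' /\ m = m'.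
Proof. intros HM Hy Hm Hm' E.
  assert (Et : t = t').
  { destruct (Req_dec t t') as [h|h]; auto. exfalso. apply Hy.
    set (z := vadd m (vscal t y)).
    assert (E1 : vscal t y = vsub z m) by (unfold z; rewrite vC, vadd_sub; auto).
    assert (E2 : vscal t' y = vsub z m') by (unfold z; rewrite E, vC, vadd_sub; auto).
    assert (E3 : vscal (t - t') y = vsub m' m).
    { unfold Rminus. rewrite vDl, <- vsubsub with (z := z), <- E1, <- E2.
      unfold vsub. rewrite vM. f_equal. f_equal. ring. }
    assert (y = vscal (/ (t - t')) (vsub m' m)).
    { rewrite <- E3, vM, Rinv_l, v1 by lra. auto. }
    rewrite H. apply (Sscal (S := M)). apply (Ssub (S := M)); auto. }
  subst t'. split; auto. rewrite (vC m), (vC m') in E. apply vcancel in E. auto. Qed.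

Section Step.
Variables (M : V -> Prop) (phi : V -> R) (y : V).
Hypothesis Hg : good M phi.
Hypothesis Sy : S y.

Lemma stepa_prop : forall m, M m ->
  phi m - N (vsub m y) <= stepa M phi y /\ stepa M phi y <= N (vadd m y) - phi m.
Proof. destruct Hg as [MS [HM [Ha [Hs Hb]]]]. intros m Hm.
  assert (Hne : exists r, exists m, M m /\ r = phi m - N (vsub m y)).
  { eexists; exists vzero; split; eauto. apply HM. }
  split.
  - apply Rsup_ub; eauto. exists (N y). intros r [m1 [Hm1 ->]].
    pose proof (Hb m1 Hm1). assert (N m1 <= N (vsub m1 y) + N y).
    { rewrite <- (vsub_add m1 y) at 1. apply Ntri; auto. apply Ssub; auto. }
    lra.
  - apply Rsup_le; auto. intros r [m1 [Hm1 ->]].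
    assert (HMm : M (vadd m1 m)) by (apply HM; auto).
    pose proof (Hb _ HMm). rewrite Ha in H by auto.
    assert (vadd m1 m = vadd (vsub m1 y) (vadd m y)).
    { unfold vsub. rewrite vAC, vNl, v0r. auto. }
    rewrite H0 in H. pose proof (Ntri (vsub m1 y) (vadd m y) ltac:(apply Ssub; auto) ltac:(apply Sadd; auto)).
    lra. Qed.

Hypothesis nMy : ~ M y.

Lemma stepphi_eq m t : M m -> stepphi M phi y (vadd m (vscal t y)) = phi m + t * stepa M phi y.
Proof. intros Hm. destruct Hg as [MS [HM _]]. unfold stepphi.
  match goal with |- epsilon ?i ?P = _ => assert (H : P (epsilon i P)) end.
  { apply epsilon_spec. eauto 6. }
  destruct H as [m' [t' [Hm' [E ->]]]]. destruct (decomp_unique M y m m' t t' HM nMy Hm Hm' E). subst. auto. Qed.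

Lemma step_good_new : good (stepM M y) (stepphi M phi y).
Proof. pose proof Hg as Hg'. destruct Hg' as [MS [HM [Ha [Hs Hb]]]].
  assert (M0 : M vzero) by apply HM.
  split; [|split; [|split; [|split]]].
  - intros z [m [t [Hm ->]]]. apply Sadd; auto. apply Sscal; auto.
  - split; [|split].
    + exists vzero, 0. split; auto. rewrite vscal0, v0l; auto.
    + intros x z [m [t [Hm ->]]] [m' [t' [Hm' ->]]]. exists (vadd m m'), (t + t').
      split. apply HM; auto. rewrite vAC, vDl. auto.
    + intros a x [m [t [Hm ->]]]. exists (vscal a m), (a * t). split. apply HM; auto.
      rewrite vDr, vM. auto.
  - intros x z [m [t [Hm ->]]] [m' [t' [Hm' ->]]].
    rewrite vAC, <- vDl, !stepphi_eq by (auto; apply HM; auto). rewrite Ha by auto. ring.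
  - intros a x [m [t [Hm ->]]]. rewrite vDr, vM, !stepphi_eq by (auto; apply HM; auto).
    rewrite Hs by auto. ring.
  - intros z [m [t [Hm ->]]]. rewrite stepphi_eq by auto.
    destruct (Rtotal_order t 0) as [Ht|[Ht|Ht]].
    + set (u := - t). assert (Hu : 0 < u) by (unfold u; lra).
      set (m' := vscal (/ u) m). assert (Hm' : M m') by (apply HM; auto).
      destruct (stepa_prop m' Hm') as [H1 _].
      assert (Em : vscal u m' = m) by (unfold m'; rewrite vM, Rinv_r, v1 by lra; auto).
      assert (Phm : u * phi m' = phi m) by (rewrite <- Hs, Em; auto).
      assert (En : u * N (vsub m' y) = N (vadd m (vscal t y))).
      { rewrite <- (Rabs_pos_eq u) by lra. rewrite <- Nscal by (apply Ssub; auto).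
        rewrite vscal_sub, Em. unfold vsub. rewrite vM. f_equal. f_equal. f_equal. unfold u; ring. }
      assert (u * (phi m' - N (vsub m' y)) <= u * stepa M phi y) by (apply Rmult_le_compat_l; lra).
      rewrite Rmult_minus_distr_l in H. assert (t * stepa M phi y = - (u * stepa M phi y)) by (unfold u; ring).
      lra.
    + subst t. rewrite vscal0, v0r. rewrite Rmult_0_l, Rplus_0_r. auto.
    + set (m' := vscal (/ t) m). assert (Hm' : M m') by (apply HM; auto).
      destruct (stepa_prop m' Hm') as [_ H1].
      assert (Em : vscal t m' = m) by (unfold m'; rewrite vM, Rinv_r, v1 by lra; auto).
      assert (Phm : t * phi m' = phi m) by (rewrite <- Hs, Em; auto).
      assert (En : t * N (vadd m' y) = N (vadd m (vscal t y))).
      { rewrite <- (Rabs_pos_eq t) at 1 by lra. rewrite <- Nscal by (apply Sadd; auto).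
        rewrite vDr, Em. auto. }
      assert (t * stepa M phi y <= t * (N (vadd m' y) - phi m')) by (apply Rmult_le_compat_l; lra).
      rewrite Rmult_minus_distr_l in H. lra. Qed.
End Step.

Lemma step_good p y : good (fst p) (snd p) -> S y ->
  good (fst (step p y)) (snd (step p y)) /\
  (forall z, fst p z -> fst (step p y) z /\ snd (step p y) z = snd p z) /\ fst (step p y) y.
Proof. intros Hg Sy. unfold step. destruct (excluded_middle_informative (fst p y)) as [h|h].
  - split; auto.
  - simpl. destruct p as [M phi]. simpl in *. split; [apply step_good_new; auto|split].
    + intros z Hz. assert (E : z = vadd z (vscal 0 y)) by (rewrite vscal0, v0r; auto).
      split. exists z, 0; auto. rewrite E at 1. rewrite stepphi_eq; auto. ring.
    + exists vzero, 1. split. apply Hg. rewrite v1, v0l; auto. Qed.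
End HB.

Section HB2.
Context {V : RVS} {Hv : vs_axioms V} {S : V -> Prop} {N : V -> R}
  {HS : is_subspace S} {HN : is_norm_on S N}.
Variables (v : V) (d : nat -> V).
Hypothesis Sv : S v.
Hypothesis Sd : forall n, S (d n).

Definition base : (V -> Prop) * (V -> R) := (fun z => z = vzero, fun _ => 0).
Definition p0 := step (N := N) base (vscal (-1) v).

Fixpoint hbs (n : nat) : (V -> Prop) * (V -> R) :=
  match n with O => p0 | Datatypes.S k => step (N := N) (hbs k) (d k) end.

Lemma base_good : good (S := S) (N := N) (fst base) (snd base).
Proof. simpl. split; [|split; [|split; [|split]]].
  - intros z ->. apply S0.
  - split; [auto|split].
    + intros x y -> ->. apply v0l.
    + intros a x ->. apply vscalz.
  - intros; ring.
  - intros; ring.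
  - intros z ->. rewrite N0. lra. Qed.

Lemma hbs_good n : good (S := S) (N := N) (fst (hbs n)) (snd (hbs n)).
Proof. induction n; simpl.
  - apply step_good; auto. apply base_good. apply Sscal; auto.
  - apply step_good; auto. Qed.

Lemma hbs_mono n k z : fst (hbs n) z -> fst (hbs (n + k)) z /\ snd (hbs (n + k)) z = snd (hbs n) z.
Proof. intros H. induction k.
  - rewrite Nat.add_0_r. auto.
  - rewrite Nat.add_succ_r. simpl. destruct IHk as [H1 H2].
    destruct (step_good (hbs (n + k)) (d (n + k)) (hbs_good _) (Sd _)) as [_ [H3 _]].
    destruct (H3 z H1). split; auto. congruence. Qed.

Lemma hbs_mono' n m z : (n <= m)%nat -> fst (hbs n) z -> fst (hbs m) z /\ snd (hbs m) z = snd (hbs n) z.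
Proof. intros Hnm H. replace m with (n + (m - n))%nat by lia. apply hbs_mono; auto. Qed.

Lemma hbs_d k : fst (hbs (Datatypes.S k)) (d k).
Proof. simpl. apply step_good; auto. apply hbs_good. Qed.

Lemma hbs_v : fst (hbs 0) v /\ snd (hbs 0) v = N v.
Proof. simpl. unfold p0, step. destruct (excluded_middle_informative (fst base (vscal (-1) v))) as [h|h].
  - simpl in h. assert (v = vzero).
    { rewrite <- (v1 v). replace 1 with (-1 * -1) by ring. rewrite <- vM, h, vscalz. auto. }
    simpl. subst. rewrite N0. auto.
  - simpl. assert (E : v = vadd vzero (vscal (-1) (vscal (-1) v))).
    { rewrite v0l, vM. replace (-1 * -1) with 1 by ring. rewrite v1. auto. }
    split.
    + exists vzero, (-1). split; auto.
    + rewrite E at 2. rewrite (stepphi_eq (S := S)); auto; [|apply base_good].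
      unfold stepa. simpl. rewrite (Rsup_eq _ (- N v)). ring.
      split.
      * intros r [m [-> ->]]. rewrite vsub0x, Nneg, Nneg by (auto; apply Sscal; auto). lra.
      * intros b Hb. apply Hb. exists vzero. split; auto.
        rewrite vsub0x, Nneg, Nneg by (auto; apply Sscal; auto). ring. Qed.

Definition Mi (z : V) : Prop := exists n, fst (hbs n) z.
Definition phii (z : V) : R := snd (hbs (epsilon (inhabits 0%nat) (fun n => fst (hbs n) z))) z.

Lemma phii_eq n z : fst (hbs n) z -> phii z = snd (hbs n) z.
Proof. intros H. unfold phii. set (k := epsilon _ _).
  assert (Hk : fst (hbs k) z) by (apply epsilon_spec; eauto).
  destruct (hbs_mono' k (max k n) z (Nat.le_max_l _ _) Hk).
  destruct (hbs_mono' n (max k n) z (Nat.le_max_r _ _) H). congruence. Qed.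

Lemma Mi_common x y : Mi x -> Mi y -> exists n, fst (hbs n) x /\ fst (hbs n) y.
Proof. intros [n Hn] [m Hm]. exists (max n m). split.
  apply (hbs_mono' n); auto; lia. apply (hbs_mono' m); auto; lia. Qed.

Lemma Mi_sub : is_subspace Mi.
Proof. split; [|split].
  - exists 0%nat. apply (hbs_good 0).
  - intros x y Hx Hy. destruct (Mi_common x y Hx Hy) as [n [H1 H2]]. exists n. apply (hbs_good n); auto.
  - intros a x [n Hn]. exists n. apply (hbs_good n); auto. Qed.

Lemma Mi_S x : Mi x -> S x.
Proof. intros [n Hn]. apply (hbs_good n); auto. Qed.

Lemma phii_add x y : Mi x -> Mi y -> phii (vadd x y) = phii x + phii y.
Proof. intros Hx Hy. destruct (Mi_common x y Hx Hy) as [n [H1 H2]]. destruct (hbs_good n) as [_ [HM [Ha _]]].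
  rewrite !(phii_eq n) by (auto; apply HM; auto). apply Ha; auto. Qed.

Lemma phii_scal a x : Mi x -> phii (vscal a x) = a * phii x.
Proof. intros [n Hx]. destruct (hbs_good n) as [_ [HM [_ [Hs _]]]].
  rewrite !(phii_eq n) by (auto; apply HM; auto). apply Hs; auto. Qed.

Lemma phii_abs x : Mi x -> Rabs (phii x) <= N x.
Proof. intros [n Hx]. destruct (hbs_good n) as [MS [HM [_ [Hs Hb]]]].
  rewrite (phii_eq n) by auto. apply Rabs_le. split.
  - assert (HMx : fst (hbs n) (vscal (-1) x)) by (apply HM; auto).
    pose proof (Hb _ HMx). rewrite Hs, Nneg in H by auto. lra.
  - apply Hb; auto. Qed.

Lemma phii_lip x y : Mi x -> Mi y -> Rabs (phii x - phii y) <= 1 * N (vsub x y).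
Proof. intros Hx Hy. assert (HMi := Mi_sub). assert (Mi (vsub x y)) by (apply (Ssub (S := Mi)); auto).
  assert (E : phii (vsub x y) = phii x - phii y).
  { unfold vsub. rewrite phii_add, phii_scal by (auto; apply Mi_sub; auto). ring. }
  rewrite <- E, Rmult_1_l. apply phii_abs; auto. Qed.

End HB2.

Lemma HahnBanach {V : RVS} {Hv : vs_axioms V} {S : V -> Prop} {N : V -> R}
  {HS : is_subspace S} {HN : is_norm_on S N} :
  separable_in S N -> forall v, S v ->
  exists h, is_dual S N h /\ (forall x, S x -> Rabs (h x) <= N x) /\ h v = N v.
Proof. intros [d [Sd Hd]] v Sv.
  set (D := Mi (N := N) v d). set (phi := phii (N := N) v d).
  assert (DS : forall x, D x -> S x) by (intros; eapply Mi_S; eauto).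
  assert (DSub : is_subspace D) by (eapply Mi_sub; eauto).
  assert (D0 : D vzero) by apply DSub.
  assert (Hlip : forall y y', D y -> D y' -> Rabs (phi y - phi y') <= 1 * N (vsub y y')) by (intros; eapply phii_lip; eauto).
  assert (Hdn : dense_in D S N).
  { intros x Hx eps He. destruct (Hd x Hx eps He) as [n Hn]. exists (d n). split; auto.
    exists (Datatypes.S n). apply hbs_d; auto. }
  exists (ext D N 1 phi). split; [|split].
  - apply (ext_dual (S := S)); auto; try lra.
    + intros; eapply phii_add; eauto.
    + intros; eapply phii_scal; eauto.
    + intros y Hy. rewrite Rmult_1_l. eapply phii_abs; eauto.
  - intros x Hx. rewrite <- (Rmult_1_l (N x)). apply (ext_bound (S := S)); auto; try lra.
    intros y Hy. rewrite Rmult_1_l. eapply phii_abs; eauto.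
  - assert (Dv : D v) by (exists 0%nat; eapply hbs_v; eauto).
    rewrite (ext_onD (S := S)); auto; try lra.
    unfold phi. rewrite (phii_eq v d Sv Sd 0%nat v) by (eapply hbs_v; eauto).
    eapply hbs_v; eauto. Qed.

Lemma seq_vs : vs_axioms seqVS.
Proof. repeat split; intros; apply functional_extensionality; intros; simpl; ring. Qed.
Existing Instance seq_vs.

Definition Pe (c : Rseq) (n : nat) : seqVS := vsum (fun i => vscal (c i) (e i)) n.

Lemma Pe_coord c n j : Pe c n j = if Nat.ltb j n then c j else 0.
Proof. unfold Pe. induction n. reflexivity. change (vsum (fun i => vscal (c i) (e i)) n j + c n * e n j = (if Nat.ltb j (Datatypes.S n) then c j else 0)). rewrite IHn. unfold e.
  destruct (Nat.ltb_spec j n); destruct (Nat.ltb_spec j (Datatypes.S n)); destruct (Nat.eqb_spec n j); try lia; subst; ring. Qed.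

Lemma vsub_seq (x y : seqVS) j : vsub x y j = x j - y j.
Proof. unfold vsub. simpl. ring. Qed.

Section FS.
Context {V : RVS} {Hv : vs_axioms V} (Y : nat -> V -> Prop) (NN : nat -> V -> R).
Hypothesis HF : Fseq Y NN.

Lemma F_sub s : is_subspace (Y s). Proof. apply HF. Qed.
Lemma F_norm s : is_norm_on (Y s) (NN s). Proof. apply HF. Qed.
Lemma F_compl s : complete_in (Y s) (NN s). Proof. apply HF. Qed.
Lemma F_sep s : separable_in (Y s) (NN s). Proof. apply HF. Qed.
Lemma F_in x s : interF Y x -> Y s x. Proof. intros H; apply H. Qed.
Lemma F_isub : is_subspace (interF Y).
Proof. split; [|split].
  - intros s. apply (F_sub s).
  - intros x y Hx Hy s. apply (F_sub s); auto.
  - intros a x Hx s. apply (F_sub s); auto. Qed.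
Lemma F_dense s : dense_in (interF Y) (Y s) (NN s).
Proof. destruct HF as [_ [_ [_ [_ H]]]]. intros x Hx eps He. apply H; auto. Qed.
Lemma F_mono s k x : Y (s + k)%nat x -> Y s x /\ NN s x <= NN (s + k)%nat x.
Proof. destruct HF as [_ [_ [H1 [H2 _]]]]. induction k.
  - rewrite Nat.add_0_r. intros; split; auto; lra.
  - rewrite Nat.add_succ_r. intros H. pose proof (H1 _ _ H). pose proof (H2 _ _ H).
    destruct (IHk H0). split; auto. lra. Qed.
Lemma F_mono0 s x : Y s x -> Y 0%nat x /\ NN 0%nat x <= NN s x.
Proof. intros H. apply (F_mono 0%nat s). auto. Qed.
End FS.

Section CBS.
Variables (Th : seqVS -> Prop) (TN : seqVS -> R).
Hypothesis HC : CB Th TN.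

Lemma CB_sub : is_subspace Th. Proof. apply HC. Qed.
Lemma CB_norm : is_norm_on Th TN. Proof. apply HC. Qed.
Lemma CB_e i : Th (e i). Proof. apply HC. Qed.
Existing Instance CB_sub. Existing Instance CB_norm.

Lemma Pe_in c n : Th (Pe c n).
Proof. apply Ssum. intros; apply Sscal; apply CB_e. Qed.

Lemma CB_partial c : Th c -> conv_in TN (Pe c) c.
Proof. intros Hc. destruct HC as [[_ Hco] [He Hu]]. destruct (Hu c Hc) as [a [Ha _]].
  assert (E : a = c).
  { apply functional_extensionality. intros j. destruct (Hco j) as [C HCj].
    apply eq_eps. intros eps Heps. set (K := Rabs C).
    destruct (Ha (eps / (K + 1))) as [n0 Hn0]. apply pos_div; auto. apply Rabs_pos.
    set (n := max n0 (Datatypes.S j)).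
    specialize (Hn0 n (Nat.le_max_l _ _)).
    change (TN (vsub (Pe a n) c) < eps / (K + 1)) in Hn0.
    assert (Hin : Th (vsub (Pe a n) c)).
    { apply Ssub; auto. apply (Pe_in a n). }
    specialize (HCj _ Hin). rewrite vsub_seq, Pe_coord in HCj.
    destruct (Nat.ltb_spec j n); [|unfold n in *; lia].
    pose proof (Nnn _ Hin). pose proof (Rle_abs C).
    assert (C * TN (vsub (Pe a n) c) <= K * TN (vsub (Pe a n) c)) by (apply Rmult_le_compat_r; auto).
    pose proof (small_mul K eps ltac:(apply Rabs_pos) Heps).
    assert (K * TN (vsub (Pe a n) c) <= K * (eps / (K + 1))) by (apply Rmult_le_compat_l; [apply Rabs_pos|lra]).
    lra. }
  subst a. exact Ha. Qed.

Lemma dual_Pe g c n : is_dual Th TN g -> g (Pe c n) = rsum (fun i => c i * g (e i)) n.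
Proof. intros Hg. unfold Pe. rewrite (gsum g) by (intros; apply Sscal; apply CB_e).
  induction n; cbn [rsum]; auto. rewrite IHn, (gscal g) by apply CB_e. auto. Qed.

Lemma CB_unique_dual g h : is_dual Th TN g -> is_dual Th TN h -> (forall i, g (e i) = h (e i)) ->
  forall c, Th c -> g c = h c.
Proof. intros Hg Hh Ei c Hc. apply eq_eps. intros eps Heps.
  set (K := dnorm Th TN g + dnorm Th TN h).
  assert (HK : 0 <= K) by (unfold K; pose proof (dnorm_nn g); pose proof (dnorm_nn h); lra).
  destruct (CB_partial c Hc (eps / (K + 1))) as [n Hn]. apply pos_div; auto.
  specialize (Hn n (le_n _)).
  assert (g (Pe c n) = h (Pe c n)).
  { rewrite !dual_Pe by auto. clear Hn. induction n; cbn [rsum]; auto. rewrite IHn, Ei. auto. }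
  pose proof (g_lip g (Pe c n) c (Pe_in c n) Hc). pose proof (g_lip h (Pe c n) c (Pe_in c n) Hc).
  apply Rabs_le_inv in H0; apply Rabs_le_inv in H1.
  pose proof (small_mul K eps HK Heps).
  assert (K * TN (vsub (Pe c n) c) <= K * (eps / (K + 1))) by (apply Rmult_le_compat_l; lra).
  apply Rabs_le. unfold K in *. lra. Qed.

Lemma dualseq_norm_eq h d : is_dual Th TN h -> (forall i, h (e i) = d i) ->
  dualseq_norm Th TN d = dnorm Th TN h.
Proof. intros Hh Ed. unfold dualseq_norm. apply Rsup_eq. split.
  - intros r [g [Hg [Eg ->]]]. right. apply dnorm_ext; auto. apply CB_unique_dual; auto.
    intros i; rewrite Eg, Ed; auto.
  - intros b Hb. apply Hb. exists h. auto. Qed.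
End CBS.

Lemma dual_vsum {V : RVS} {Hv : vs_axioms V} {S : V -> Prop} {N : V -> R} {HS : is_subspace S}
  (h : V -> R) (u : nat -> V) (c : nat -> R) n :
  is_dual S N h -> (forall i, S (u i)) ->
  h (vsum (fun i => vscal (c i) (u i)) n) = rsum (fun i => c i * h (u i)) n.
Proof. intros Hh Hu. rewrite (gsum h) by (intros; apply Sscal; auto).
  induction n; cbn [rsum]; auto. rewrite IHn, (gscal h) by auto. auto. Qed.

Section Main.
Context {V : RVS} {Hv : vs_axioms V} (X : nat -> V -> Prop) (N : nat -> V -> R)
  (Th : nat -> seqVS -> Prop) (TN : nat -> seqVS -> R) (g : nat -> V -> R).
Hypothesis HX : Fseq X N.
Hypothesis HC : forall s, CB (Th s) (TN s).
Hypothesis HT : Fseq Th TN.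
Hypothesis HB : F_Bessel X N Th TN g.

Local Instance iXs : forall s, is_subspace (X s) := F_sub X N HX.
Local Instance iXn : forall s, is_norm_on (X s) (N s) := F_norm X N HX.
Local Instance iXF : is_subspace (interF X) := F_isub X N HX.
Local Instance iTs : forall s, is_subspace (Th s) := F_sub Th TN HT.
Local Instance iTn : forall s, is_norm_on (Th s) (TN s) := F_norm Th TN HT.
Local Instance iTF : is_subspace (interF Th) := F_isub Th TN HT.

Definition U (x : V) : seqVS := fun i => g i x.

Lemma U_in x : interF X x -> interF Th (U x).
Proof. apply HB. Qed.

Lemma U_bound s : exists B, 0 <= B /\ forall x, interF X x -> TN s (U x) <= B * N s x.
Proof. destruct HB as [_ [_ H]]. destruct (H s) as [B HB']. exists (Rabs B). split. apply Rabs_pos.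
  intros x Hx. eapply Rle_trans. apply HB'; auto. apply Rmult_le_compat_r. apply Nnn. apply Hx.
  apply Rle_abs. Qed.

Lemma U_add x y : interF X x -> interF X y -> U (vadd x y) = vadd (U x) (U y).
Proof. intros Hx Hy. apply functional_extensionality; intros i. simpl. unfold U.
  destruct HB as [H _]. apply (H i); auto. Qed.
Lemma U_scal a x : interF X x -> U (vscal a x) = vscal a (U x).
Proof. intros Hx. apply functional_extensionality; intros i. simpl. unfold U.
  destruct HB as [H _]. apply (H i); auto. Qed.
Lemma U_sub x y : interF X x -> interF X y -> U (vsub x y) = vsub (U x) (U y).
Proof. intros. unfold vsub. rewrite U_add, U_scal; auto. apply iXF; auto. Qed.

Lemma K1 (f : nat -> V) s h h' : (forall i, interF X (f i)) -> reconstructs X N g f ->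
  is_dual (X s) (N s) h -> is_dual (Th s) (TN s) h' -> (forall i, h' (e i) = h (f i)) ->
  forall x, interF X x -> h x = h' (U x).
Proof. intros Hf Hr Hh Hh' Eh x Hx. apply eq_eps; intros eps Heps.
  set (K := dnorm (X s) (N s) h + dnorm (Th s) (TN s) h').
  assert (HK : 0 <= K) by (unfold K; pose proof (dnorm_nn (S:=X s) (N:=N s) h); pose proof (dnorm_nn (S:=Th s) (N:=TN s) h'); lra).
  destruct (Hr x Hx s (eps / (K + 1)) (pos_div _ _ HK Heps)) as [n1 H1].
  assert (HUx : Th s (U x)) by (apply U_in; auto).
  destruct (CB_partial _ _ (HC s) (U x) HUx (eps / (K + 1)) (pos_div _ _ HK Heps)) as [n2 H2].
  set (n := max n1 n2). specialize (H1 n (Nat.le_max_l _ _)). specialize (H2 n (Nat.le_max_r _ _)).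
  set (P := vsum (fun i => vscal (U x i) (f i)) n).
  change (N s (vsub P x) < eps / (K + 1)) in H1.
  assert (HP : X s P) by (apply Ssum; intros; apply Sscal; apply Hf).
  assert (E : h P = h' (Pe (U x) n)).
  { unfold P. rewrite (dual_vsum (S := X s) (N := N s) h) by (auto; intros; apply Hf). rewrite (dual_Pe (Th s) (TN s)) by auto.
    apply rsum_ext; intros; rewrite Eh; auto. }
  pose proof (g_lip h P x HP (Hx s)). pose proof (g_lip h' (Pe (U x) n) (U x) (Pe_in _ _ (HC s) _ _) HUx).
  apply Rabs_le_inv in H; apply Rabs_le_inv in H0.
  pose proof (small_mul K eps HK Heps).
  assert (Dh := dnorm_nn (S:=X s) (N:=N s) h). assert (Dh' := dnorm_nn (S:=Th s) (N:=TN s) h').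
  assert (dnorm (X s) (N s) h * N s (vsub P x) <= dnorm (X s) (N s) h * (eps / (K + 1))) by (apply Rmult_le_compat_l; lra).
  assert (dnorm (Th s) (TN s) h' * TN s (vsub (Pe (U x) n) (U x)) <= dnorm (Th s) (TN s) h' * (eps / (K + 1))) by (apply Rmult_le_compat_l; lra).
  assert (K * (eps / (K+1)) = dnorm (X s) (N s) h * (eps / (K + 1)) + dnorm (Th s) (TN s) h' * (eps / (K + 1))) by (unfold K; ring).
  apply Rabs_le. lra. Qed.


Lemma B_lower (f : nat -> V) s : (forall i, interF X (f i)) -> reconstructs X N g f ->
  Bessel_dual_s X N Th TN s f -> frame_dual_s X N Th TN s f.
Proof. intros Hf Hr Hbs. split; auto.
  destruct (U_bound s) as [Bs [HBs HUb]]. exists (/ (Bs + 1)). split.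
  apply Rinv_0_lt_compat; lra.
  intros h Hh. destruct Hbs as [H1 _]. destruct (H1 h Hh) as [h' [Hh' Eh']].
  rewrite (dualseq_norm_eq _ _ (HC s) h') by auto.
  assert (Dh := dnorm_nn (S:=X s) (N:=N s) h). assert (Dh' := dnorm_nn (S:=Th s) (N:=TN s) h').
  assert (dnorm (X s) (N s) h <= Bs * dnorm (Th s) (TN s) h').
  { apply (dnorm_le (S:=X s) (N:=N s) h). apply Rmult_le_pos; auto. apply (dense_bound (interF X) h); auto.
    - apply iXF.
    - apply F_dense; auto.
    - apply Rmult_le_pos; auto.
    - intros y Hy. rewrite (K1 f s h h') by auto.
      eapply Rle_trans. apply (dnorm_bound (S:=Th s) (N:=TN s) h'). apply U_in; auto.
      pose proof (HUb y Hy) as Hu. assert (0 <= N s y) by (apply Nnn; apply Hy).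
      apply Rmult_le_compat_l with (r := dnorm (Th s) (TN s) h') in Hu; auto. nra. }
  apply (Rmult_le_reg_l (Bs + 1)); [lra|]. rewrite <- Rmult_assoc, Rinv_r, Rmult_1_l by lra. nra. Qed.

Lemma dual_add {W : RVS} {S : W -> Prop} {NN : W -> R} (g1 g2 : W -> R) :
  is_dual S NN g1 -> is_dual S NN g2 -> is_dual S NN (fun x => g1 x + g2 x).
Proof. intros [A1 [B1 [C1 H1]]] [A2 [B2 [C2 H2]]]. split; [|split].
  - intros; rewrite A1, A2 by auto; ring.
  - intros; rewrite B1, B2 by auto; ring.
  - exists (C1 + C2). intros x Hx. eapply Rle_trans. apply Rabs_triang.
    pose proof (H1 x Hx); pose proof (H2 x Hx). lra. Qed.

Lemma dual_scal {W : RVS} {S : W -> Prop} {NN : W -> R} (a : R) (g1 : W -> R) :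
  is_dual S NN g1 -> is_dual S NN (fun x => a * g1 x).
Proof. intros [A1 [B1 [C1 H1]]]. split; [|split].
  - intros; rewrite A1 by auto; ring.
  - intros; rewrite B1 by auto; ring.
  - exists (Rabs a * C1). intros x Hx. rewrite Rabs_mult, Rmult_assoc.
    apply Rmult_le_compat_l. apply Rabs_pos. auto. Qed.

Section BF.
Variable s : nat.
Variable Bs : R.
Hypothesis HBs : 0 <= Bs.
Hypothesis HUb : forall x, interF X x -> TN s (U x) <= Bs * N s x.

Definition pick (d : Rseq) : seqVS -> R :=
  epsilon (inhabits (fun _ : seqVS => 0))
    (fun g' => is_dual (Th s) (TN s) g' /\ forall i, g' (e i) = d i).
Definition Lc d := dnorm (Th s) (TN s) (pick d) * Bs.
Definition phiW d (x : V) := pick d (U x).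
Definition Wb d := ext (interF X) (N s) (Lc d) (phiW d).

Section D.
Variable d : Rseq.
Hypothesis Hd : dualseq (Th s) (TN s) d.

Lemma pick_spec : is_dual (Th s) (TN s) (pick d) /\ forall i, pick d (e i) = d i.
Proof. unfold pick. apply epsilon_spec. exact Hd. Qed.
Local Instance pick_dual : is_dual (Th s) (TN s) (pick d). Proof. apply pick_spec. Qed.

Lemma Lc_nn : 0 <= Lc d.
Proof. unfold Lc. pose proof (dnorm_nn (S:=Th s) (N:=TN s) (pick d)). nra. Qed.

Lemma phiW_bound y : interF X y -> Rabs (phiW d y) <= Lc d * N s y.
Proof. intros Hy. unfold phiW, Lc. eapply Rle_trans. apply (dnorm_bound (S:=Th s) (N:=TN s) (pick d)). apply U_in; auto.
  pose proof (dnorm_nn (S:=Th s) (N:=TN s) (pick d)).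
  rewrite Rmult_assoc. apply Rmult_le_compat_l; auto. Qed.

Lemma phiW_lip y y' : interF X y -> interF X y' -> Rabs (phiW d y - phiW d y') <= Lc d * N s (vsub y y').
Proof. intros Hy Hy'. unfold phiW. rewrite <- (gsub (S:=Th s) (N:=TN s) (pick d)) by first [apply U_in; auto | apply pick_spec; auto].
  rewrite <- U_sub by auto. apply phiW_bound. apply Ssub; auto. Qed.

Lemma phiW_add y y' : interF X y -> interF X y' -> phiW d (vadd y y') = phiW d y + phiW d y'.
Proof. intros. unfold phiW. rewrite U_add by auto. apply (gadd (S:=Th s) (N:=TN s)); first [apply U_in; auto | apply pick_spec; auto]. Qed.

Lemma phiW_scal a y : interF X y -> phiW d (vscal a y) = a * phiW d y.
Proof. intros. unfold phiW. rewrite U_scal by auto. apply (gscal (S:=Th s) (N:=TN s)); first [apply U_in; auto | apply pick_spec; auto]. Qed.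

Lemma XF0 : interF X vzero. Proof. apply iXF. Qed.

Lemma Wb_dual : is_dual (X s) (N s) (Wb d).
Proof. apply (ext_dual (S := X s)); auto using Lc_nn, phiW_lip, phiW_add, phiW_scal, phiW_bound, XF0.
  all: first [ intros z Hz; apply Hz | apply F_dense; auto | apply iXF | auto ]. Qed.

Lemma Wb_lip x x' : X s x -> X s x' -> Rabs (Wb d x - Wb d x') <= Lc d * N s (vsub x x').
Proof. intros. apply (ext_lip (S := X s)); auto using Lc_nn, phiW_lip, XF0.
  all: first [ intros z Hz; apply Hz | apply F_dense; auto | apply iXF | auto ]. Qed.

Lemma Wb_onD y : interF X y -> Wb d y = phiW d y.
Proof. intros. apply (ext_onD (S := X s)); auto using Lc_nn, phiW_lip, XF0. all: first [ intros z Hz; apply Hz | apply F_dense; auto | apply iXF | auto ]. Qed.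

Lemma Wb_bound x : X s x -> Rabs (Wb d x) <= Lc d * N s x.
Proof. intros. apply (ext_bound (S := X s)); auto using Lc_nn, phiW_lip, XF0, phiW_bound.
  all: first [ intros z Hz; apply Hz | apply F_dense; auto | apply iXF | auto ]. Qed.

Lemma Wb_agree psi M : 0 <= M -> (forall x x', X s x -> X s x' -> Rabs (psi x - psi x') <= M * N s (vsub x x')) ->
  (forall y, interF X y -> psi y = phiW d y) -> forall x, X s x -> Wb d x = psi x.
Proof. intros. apply (ext_agree (S := X s)) with (M := M); auto using Lc_nn, phiW_lip, XF0.
  all: first [ intros z Hz; apply Hz | apply F_dense; auto | apply iXF | auto ]. Qed.
End D.

Lemma B_op : bounded_op_dual_s X N Th TN s Wb.
Proof. split; [|split; [|split]].
  - intros c d Hc Hd x Hx.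
    assert (Hcd : dualseq (Th s) (TN s) (fun i => c i + d i)).
    { exists (fun y => pick c y + pick d y). split. apply dual_add; apply pick_spec; auto.
      intros i. rewrite (proj2 (pick_spec c Hc)), (proj2 (pick_spec d Hd)). auto. }
    apply (Wb_agree _ Hcd (fun x => Wb c x + Wb d x)) with (M := Lc c + Lc d); auto.
    + pose proof (Lc_nn c Hc); pose proof (Lc_nn d Hd); lra.
    + intros x1 x2 H1 H2. pose proof (Wb_lip c Hc x1 x2 H1 H2). pose proof (Wb_lip d Hd x1 x2 H1 H2).
      replace (Wb c x1 + Wb d x1 - (Wb c x2 + Wb d x2)) with ((Wb c x1 - Wb c x2) + (Wb d x1 - Wb d x2)) by ring.
      eapply Rle_trans. apply Rabs_triang. lra.
    + intros y Hy. rewrite !Wb_onD by auto. unfold phiW.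
      symmetry. apply (CB_unique_dual _ _ (HC s) (pick (fun i => c i + d i)) (fun y => pick c y + pick d y)).
      * apply pick_spec; auto.
      * apply dual_add; apply pick_spec; auto.
      * intros i. rewrite (proj2 (pick_spec _ Hcd)), (proj2 (pick_spec c Hc)), (proj2 (pick_spec d Hd)). auto.
      * apply U_in; auto.
  - intros a c Hc x Hx.
    assert (Hac : dualseq (Th s) (TN s) (fun i => a * c i)).
    { exists (fun y => a * pick c y). split. apply dual_scal; apply pick_spec; auto.
      intros i. rewrite (proj2 (pick_spec c Hc)). auto. }
    apply (Wb_agree _ Hac (fun x => a * Wb c x)) with (M := Rabs a * Lc c); auto.
    + pose proof (Lc_nn c Hc); pose proof (Rabs_pos a); nra.
    + intros x1 x2 H1 H2. pose proof (Wb_lip c Hc x1 x2 H1 H2).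
      replace (a * Wb c x1 - a * Wb c x2) with (a * (Wb c x1 - Wb c x2)) by ring.
      rewrite Rabs_mult, Rmult_assoc. apply Rmult_le_compat_l; auto. apply Rabs_pos.
    + intros y Hy. rewrite !Wb_onD by auto. unfold phiW.
      symmetry. apply (CB_unique_dual _ _ (HC s) (pick (fun i => a * c i)) (fun y => a * pick c y)).
      * apply pick_spec; auto.
      * apply dual_scal; apply pick_spec; auto.
      * intros i. rewrite (proj2 (pick_spec _ Hac)), (proj2 (pick_spec c Hc)). auto.
      * apply U_in; auto.
  - intros c Hc. apply Wb_dual; auto.
  - exists Bs. intros c Hc. pose proof (pick_spec c Hc) as [Hp Ep].
    rewrite (dualseq_norm_eq _ _ (HC s) (pick c)) by auto.
    assert (Hw := Wb_dual c Hc).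
    pose proof (dnorm_nn (S:=Th s) (N:=TN s) (pick c)).
    apply (dnorm_le (S:=X s) (N:=N s) (Wb c)). apply Rmult_le_pos; auto.
    intros x Hx. eapply Rle_trans. apply Wb_bound; auto. unfold Lc. right; ring. Qed.
End BF.

Lemma B_frame (f : nat -> V) s : (forall i, interF X (f i)) -> reconstructs X N g f ->
  Bessel_dual_s X N Th TN s f -> Banach_frame_dual_s X N Th TN s f.
Proof. intros Hf Hr Hbs. split. apply B_lower; auto.
  destruct (U_bound s) as [Bs [HBs HUb]]. exists (Wb s Bs). split. apply B_op; auto.
  intros h Hh x Hx. destruct Hbs as [H1 _]. pose proof (H1 h Hh) as Hd.
  destruct (pick_spec s (fun i => h (f i)) Hd) as [Hp Ep].
  apply (Wb_agree s Bs HBs HUb _ Hd) with (M := dnorm (X s) (N s) h); auto.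
  - apply dnorm_nn; auto.
  - intros; apply g_lip; auto.
  - intros y Hy. unfold phiW. apply (K1 f s h); auto. Qed.

Lemma eF i : interF Th (e i).
Proof. intros s. apply (CB_e _ _ (HC s)). Qed.

Lemma PeF c n : interF Th (Pe c n).
Proof. apply Ssum. intros; apply Sscal; apply eF. Qed.

Lemma A_forward : F_frame X N Th TN g -> exists f, DF_Bessel X N Th TN f /\ reconstructs X N g f.
Proof. intros [_ [W [[Wadd [Wscal [WX Wbd]]] WU]]].
  set (f := fun i => W (e i)).
  assert (W0 : W vzero = vzero).
  { rewrite <- (vscal0 vzero) at 1. rewrite Wscal by apply iTF. apply vscal0. }
  assert (WPe : forall c n, W (Pe c n) = vsum (fun i => vscal (c i) (f i)) n).
  { intros c n. induction n. apply W0. unfold Pe in *. cbn [vsum].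
    rewrite Wadd, IHn, Wscal by (apply PeF || apply eF || (apply Sscal; apply eF)). auto. }
  assert (Wsub : forall c d, interF Th c -> interF Th d -> W (vsub c d) = vsub (W c) (W d)).
  { intros c d Hc Hd. unfold vsub. rewrite Wadd, Wscal; auto. apply Sscal; auto. }
  assert (WK : forall s, exists K, 0 <= K /\ forall c, interF Th c -> N s (W c) <= K * TN s c).
  { intros s. destruct (Wbd s) as [K HK]. exists (Rabs K). split. apply Rabs_pos.
    intros c Hc. eapply Rle_trans. apply HK; auto. apply Rmult_le_compat_r. apply Nnn; apply Hc. apply Rle_abs. }
  exists f. split.
  - split. intros i; apply WX; apply eF.
    intros s. destruct (WK s) as [K [HK0 HK]]. split.
    + intros h Hh.
      assert (Dh := dnorm_nn (S:=X s) (N:=N s) h).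
      set (L := dnorm (X s) (N s) h * K).
      assert (HL : 0 <= L) by (apply Rmult_le_pos; auto).
      assert (Hb : forall c, interF Th c -> Rabs (h (W c)) <= L * TN s c).
      { intros c Hc. eapply Rle_trans. apply (dnorm_bound (S:=X s) (N:=N s) h). apply WX; auto.
        unfold L. rewrite Rmult_assoc. apply Rmult_le_compat_l; auto. }
      assert (Hlip : forall c c', interF Th c -> interF Th c' -> Rabs (h (W c) - h (W c')) <= L * TN s (vsub c c')).
      { intros c c' Hc Hc'. rewrite <- (gsub (S:=X s) (N:=N s) h) by (auto; apply WX; auto).
        rewrite <- Wsub by auto. apply Hb. apply Ssub; auto. }
      exists (ext (interF Th) (TN s) L (fun c => h (W c))). split.
      * apply (ext_dual (S := Th s)); auto.
        all: first [ intros z Hz; apply Hz | apply F_dense; auto | apply iTF | auto ].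
        -- intros. rewrite Wadd by auto. apply (gadd (S:=X s) (N:=N s) h); apply WX; auto.
        -- intros. rewrite Wscal by auto. apply (gscal (S:=X s) (N:=N s) h); apply WX; auto.
      * intros i. apply (ext_onD (S := Th s)); auto. all: first [ intros z Hz; apply Hz | apply F_dense; auto | apply iTF | apply eF | auto ].
    + exists K. intros h Hh.
      assert (Dh := dnorm_nn (S:=X s) (N:=N s) h).
      set (L := dnorm (X s) (N s) h * K).
      assert (HL : 0 <= L) by (apply Rmult_le_pos; auto).
      assert (Hb : forall c, interF Th c -> Rabs (h (W c)) <= L * TN s c).
      { intros c Hc. eapply Rle_trans. apply (dnorm_bound (S:=X s) (N:=N s) h). apply WX; auto.
        unfold L. rewrite Rmult_assoc. apply Rmult_le_compat_l; auto. }
      assert (Hlip : forall c c', interF Th c -> interF Th c' -> Rabs (h (W c) - h (W c')) <= L * TN s (vsub c c')).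
      { intros c c' Hc Hc'. rewrite <- (gsub (S:=X s) (N:=N s) h) by (auto; apply WX; auto).
        rewrite <- Wsub by auto. apply Hb. apply Ssub; auto. }
      set (h' := ext (interF Th) (TN s) L (fun c => h (W c))).
      assert (Hh' : is_dual (Th s) (TN s) h').
      { apply (ext_dual (S := Th s)); auto.
        all: first [ intros z Hz; apply Hz | apply F_dense; auto | apply iTF | auto ].
        -- intros. rewrite Wadd by auto. apply (gadd (S:=X s) (N:=N s) h); apply WX; auto.
        -- intros. rewrite Wscal by auto. apply (gscal (S:=X s) (N:=N s) h); apply WX; auto. }
      assert (Eh' : forall i, h' (e i) = h (f i)).
      { intros i. apply (ext_onD (S := Th s)); auto. all: first [ intros z Hz; apply Hz | apply F_dense; auto | apply iTF | apply eF | auto ]. }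
      rewrite (dualseq_norm_eq _ _ (HC s) h') by auto.
      apply (dnorm_le (S:=Th s) (N:=TN s) h'). rewrite Rmult_comm; auto.
      intros c Hc. unfold h'. replace (K * dnorm (X s) (N s) h) with L by (unfold L; ring).
      apply (ext_bound (S := Th s)); auto.
      all: first [ intros z Hz; apply Hz | apply F_dense; auto | apply iTF | auto ].
  - intros x Hx s eps Heps. destruct (WK s) as [K [HK0 HK]].
    assert (HUx : interF Th (U x)) by (apply U_in; auto).
    destruct (CB_partial _ _ (HC s) (U x) (HUx s) (eps / (K + 1)) (pos_div _ _ HK0 Heps)) as [n0 Hn0].
    exists n0. intros n Hn. specialize (Hn0 n Hn).
    change (vsum (fun i => vscal (U x i) (f i)) n) with (vsum (fun i => vscal (U x i) (f i)) n).
    replace (vsum (fun i => vscal (g i x) (f i)) n) with (W (Pe (U x) n)) by apply WPe.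
    rewrite <- (WU x Hx) at 2. rewrite <- Wsub by (auto; apply PeF).
    eapply Rle_lt_trans. apply HK. apply Ssub; auto; apply PeF.
    assert (K * TN s (vsub (Pe (U x) n) (U x)) <= K * (eps / (K + 1))) by (apply Rmult_le_compat_l; [lra| left; exact Hn0]).
    pose proof (small_mul K eps HK0 Heps). change (K * TN s (vsub (Pe (U x) n) (U x)) < eps). lra. Qed.

Section Back.
Variable f : nat -> V.
Hypothesis HDF : DF_Bessel X N Th TN f.
Hypothesis Hr : reconstructs X N g f.

Definition Pf (c : Rseq) (n : nat) : V := vsum (fun i => vscal (c i) (f i)) n.

Lemma fX s i : X s (f i). Proof. apply HDF. Qed.
Lemma PfX s c n : X s (Pf c n). Proof. apply Ssum; intros; apply Sscal; apply fX. Qed.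

Lemma KeyB s : exists B, 0 <= B /\ forall c c' n m,
  N s (vsub (Pf c n) (Pf c' m)) <= B * TN s (vsub (Pe c n) (Pe c' m)).
Proof. destruct HDF as [_ Hs]. destruct (Hs s) as [H1 [B0 HB0]]. exists (Rabs B0). split. apply Rabs_pos.
  intros c c' n m. set (v := vsub (Pf c n) (Pf c' m)).
  assert (Hv' : X s v) by (apply Ssub; apply PfX).
  destruct (HahnBanach (S := X s) (N := N s) (F_sep X N HX s) v Hv') as [h [Hh [Hh1 Hhv]]].
  assert (Dh1 : dnorm (X s) (N s) h <= 1).
  { apply (dnorm_le (S:=X s) (N:=N s) h). lra. intros; rewrite Rmult_1_l; auto. }
  assert (Dh := dnorm_nn (S:=X s) (N:=N s) h).
  destruct (H1 h Hh) as [h' [Hh' Eh']].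
  pose proof (HB0 h Hh) as Hb. rewrite (dualseq_norm_eq _ _ (HC s) h') in Hb by auto.
  assert (Dh' := dnorm_nn (S:=Th s) (N:=TN s) h').
  assert (E : h v = h' (vsub (Pe c n) (Pe c' m))).
  { unfold v. rewrite (gsub (S:=X s) (N:=N s) h) by apply PfX.
    rewrite (gsub (S:=Th s) (N:=TN s) h') by apply (Pe_in _ _ (HC s)).
    unfold Pf. rewrite !(dual_vsum (S:=X s) (N:=N s) h) by (auto; intros; apply fX).
    rewrite !(dual_Pe (Th s) (TN s)) by auto.
    f_equal; apply rsum_ext; intros; rewrite Eh'; auto. }
  rewrite <- Hhv, E. eapply Rle_trans. apply Rle_abs.
  eapply Rle_trans. apply (dnorm_bound (S:=Th s) (N:=TN s) h'). apply Ssub; apply (Pe_in _ _ (HC s)).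
  apply Rmult_le_compat_r. apply Nnn. apply Ssub; apply (Pe_in _ _ (HC s)).
  pose proof (Rle_abs B0). pose proof (Rabs_pos B0).
  assert (B0 * dnorm (X s) (N s) h <= Rabs B0 * dnorm (X s) (N s) h) by (apply Rmult_le_compat_r; auto).
  assert (Rabs B0 * dnorm (X s) (N s) h <= Rabs B0 * 1) by (apply Rmult_le_compat_l; auto).
  lra. Qed.

Lemma Pe0 c : Pe c 0 = vzero. Proof. reflexivity. Qed.
Lemma Pf0 c : Pf c 0 = vzero. Proof. reflexivity. Qed.

Lemma lim_s c s : interF Th c -> exists y, X s y /\ conv_in (N s) (Pf c) y.
Proof. intros Hc. destruct (KeyB s) as [B [HB0 HK]].
  apply (F_compl X N HX s). intros; apply PfX.
  intros eps Heps. destruct (conv_cauchy (S:=Th s) (N:=TN s) (Pe c) c (fun n => Pe_in _ _ (HC s) c n) (Hc s)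
    (CB_partial _ _ (HC s) c (Hc s)) (eps / (B + 1)) (pos_div _ _ HB0 Heps)) as [n0 Hn0].
  exists n0. intros n m Hn Hm. eapply Rle_lt_trans. apply HK.
  assert (B * TN s (vsub (Pe c n) (Pe c m)) <= B * (eps / (B + 1))) by (apply Rmult_le_compat_l; [lra|left; apply Hn0; auto]).
  pose proof (small_mul B eps HB0 Heps). lra. Qed.

Lemma lim_all c : interF Th c -> exists y, interF X y /\ forall s, conv_in (N s) (Pf c) y.
Proof. intros Hc. destruct (lim_s c 0%nat Hc) as [y0 [Hy0 C0]].
  assert (E : forall s, X s y0 /\ conv_in (N s) (Pf c) y0).
  { intros s. destruct (lim_s c s Hc) as [ys [Hys Cs]].
    assert (Cs0 : conv_in (N 0%nat) (Pf c) ys).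
    { intros eps Heps. destruct (Cs eps Heps) as [n0 Hn0]. exists n0. intros n Hn.
      assert (X s (vsub (Pf c n) ys)) by (apply Ssub; auto; apply PfX).
      destruct (F_mono0 X N HX s _ H). specialize (Hn0 n Hn). lra. }
    assert (ys = y0).
    { apply (conv_unique (S:=X 0%nat) (N:=N 0%nat) (Pf c)); auto. apply PfX.
      apply (F_mono0 X N HX s _ Hys). }
    subst; auto. }
  exists y0. split. intros s; apply E. intros s; apply E. Qed.

Definition Wa (c : Rseq) : V :=
  epsilon (inhabits vzero) (fun y => interF X y /\ forall s, conv_in (N s) (Pf c) y).

Lemma Wa_spec c : interF Th c -> interF X (Wa c) /\ forall s, conv_in (N s) (Pf c) (Wa c).
Proof. intros Hc. unfold Wa. apply epsilon_spec. apply lim_all; auto. Qed.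

Lemma Wa_char c y : interF Th c -> interF X y -> conv_in (N 0%nat) (Pf c) y -> Wa c = y.
Proof. intros Hc Hy Cy. destruct (Wa_spec c Hc) as [HW CW].
  apply (conv_unique (S:=X 0%nat) (N:=N 0%nat) (Pf c)); auto. intros; apply PfX. Qed.

Lemma Wa_add c d : interF Th c -> interF Th d -> Wa (vadd c d) = vadd (Wa c) (Wa d).
Proof. intros Hc Hd. destruct (Wa_spec c Hc) as [HWc CWc]. destruct (Wa_spec d Hd) as [HWd CWd].
  apply Wa_char. apply iTF; auto. apply iXF; auto.
  assert (E : Pf (vadd c d) = fun n => vadd (Pf c n) (Pf d n)).
  { apply functional_extensionality; intros n. unfold Pf. rewrite <- vsum_add. f_equal.
    apply functional_extensionality; intros i. simpl. apply vDl. }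
  rewrite E. apply conv_add; auto; intros; apply PfX. Qed.

Lemma Wa_scal a c : interF Th c -> Wa (vscal a c) = vscal a (Wa c).
Proof. intros Hc. destruct (Wa_spec c Hc) as [HWc CWc].
  apply Wa_char. apply iTF; auto. apply iXF; auto.
  assert (E : Pf (vscal a c) = fun n => vscal a (Pf c n)).
  { apply functional_extensionality; intros n. unfold Pf. rewrite <- vsum_scal. f_equal.
    apply functional_extensionality; intros i. simpl. rewrite vM. auto. }
  rewrite E. apply conv_scal; auto; intros; apply PfX. Qed.

Lemma Wa_bound s : exists K, 0 <= K /\ forall c, interF Th c -> N s (Wa c) <= K * TN s c.
Proof. destruct (KeyB s) as [B [HB0 HK]]. exists B. split; auto. intros c Hc.
  destruct (Wa_spec c Hc) as [HW CW].
  apply le_eps. intros eps Heps.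
  destruct (CW s (eps / 2)) as [n1 H1]. lra.
  destruct (CB_partial _ _ (HC s) c (Hc s) (eps / 2 / (B + 1))) as [n2 H2]. apply pos_div; lra.
  set (n := max n1 n2). specialize (H1 n (Nat.le_max_l _ _)). specialize (H2 n (Nat.le_max_r _ _)).
  pose proof (HK c c n 0%nat) as Hn. rewrite Pf0, Pe0, !vsubx0 in Hn.
  pose proof (Nrev (S:=X s) (N:=N s) (Pf c n) (Wa c) (PfX s c n) (HW s)).
  pose proof (Nrev (S:=Th s) (N:=TN s) (Pe c n) c (Pe_in _ _ (HC s) c n) (Hc s)).
  apply Rabs_le_inv in H; apply Rabs_le_inv in H0.
  assert (B * TN s (Pe c n) <= B * (TN s c + eps / 2 / (B + 1))) by (apply Rmult_le_compat_l; lra).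
  pose proof (small_mul B (eps / 2) HB0 ltac:(lra)). lra. Qed.

Lemma A_backward : F_frame X N Th TN g.
Proof.
  assert (WU : forall x, interF X x -> Wa (U x) = x).
  { intros x Hx. apply Wa_char; auto. apply U_in; auto. apply (Hr x Hx 0%nat). }
  split; [split|].
  - exact HB.
  - intros s. destruct (Wa_bound s) as [K [HK0 HK]]. exists (/ (K + 1)). split.
    apply Rinv_0_lt_compat; lra.
    intros x Hx. pose proof (HK (U x) (U_in x Hx)). rewrite WU in H by auto.
    assert (0 <= TN s (U x)) by (apply Nnn; apply (U_in x Hx)).
    apply (Rmult_le_reg_l (K + 1)). lra. rewrite <- Rmult_assoc, Rinv_r, Rmult_1_l by lra.
    change (TN s (fun i => g i x)) with (TN s (U x)). nra.
  - exists Wa. split; [split; [|split; [|split]]|].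
    + intros; apply Wa_add; auto.
    + intros; apply Wa_scal; auto.
    + intros; apply Wa_spec; auto.
    + intros s. destruct (Wa_bound s) as [K [_ HK]]. eauto.
    + intros x Hx. apply (WU x Hx). Qed.
End Back.

End Main.

Theorem theorem3p6 (V : RVS) (X : nat -> V -> Prop) (N : nat -> V -> R)
    (Th : nat -> seqVS -> Prop) (TN : nat -> seqVS -> R) (g : nat -> V -> R) :
  vs_axioms V ->
  Fseq X N ->
  (forall s, CB (Th s) (TN s)) -> Fseq Th TN ->
  F_Bessel X N Th TN g ->
  ((exists f : nat -> V, DF_Bessel X N Th TN f /\ reconstructs X N g f)
     <-> F_frame X N Th TN g)
  /\
  (forall f : nat -> V, DF_Bessel X N Th TN f -> reconstructs X N g f ->
     ((forall s, CB (Th s) (TN s) /\ CB (dualseq (Th s) (TN s)) (dualseq_norm (Th s) (TN s)))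
        -> pre_DF_frame X N Th TN f) /\
     ((forall s, CB (Th s) (TN s) /\ reflexive (Th s) (TN s))
        -> DF_frame X N Th TN f)).
Proof.
  intros Hv HX HC HT HB. split; [split|].
  - intros [f [H1 H2]]. eapply A_backward; eauto.
  - intros H. eapply A_forward; eauto.
  - intros f Hdf Hr. split; intros _.
    + split; [apply Hdf|]. intros s. eapply B_lower; eauto; apply Hdf.
    + split; [apply Hdf|]. intros s. eapply B_frame; eauto; apply Hdf.
Qed.
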